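(* Under the hypotheses of Theorem 2 (NEAR-DGD$^t$ from a common initial point $s_0$, so $x_{i,0}=y_{i,0}=s_0$; each $f_i$ $\mu_i$-strongly convex with $L_i$-Lipschitz gradient; $0<\alpha\le\min\{1/L,c_4\}$), with $\alpha c_2<1$, $\delta=\frac{c_2}{2(1-\alpha c_2)}$, $c_1=\sqrt{1-\alpha c_2/2}$ and $c_3=\sqrt{\alpha(\alpha+\delta^{-1})}\,DL$, for all $k=0,1,2,\ldots$ and $1\le i\le n$: $$\|x_{i,k}-x^\star\|\le c_1^k\|s_0-x^\star\|+\frac{c_3}{\sqrt{1-c_1^2}}\beta^t+\beta^tD,$$ $$\|y_{i,k}-x^\star\|\le c_1^k\|s_0-x^\star\|+\frac{c_3}{\sqrt{1-c_1^2}}\beta^t+\beta^tD+2D.$$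
   Context: NEAR-DGD$^t$: $\mathbf{x}_k=(\mathbf{W}^t\otimes I_p)\mathbf{y}_k$, $\mathbf{y}_{k+1}=\mathbf{x}_k-\alpha\nabla\mathbf{f}(\mathbf{x}_k)$, $\nabla\mathbf{f}(\mathbf{x})=(\nabla f_1(x_1);\ldots;\nabla f_n(x_n))$, with $\mathbf{W}$ a symmetric doubly-stochastic matrix of a connected network ($w_{ii}>0$, $w_{ij}>0$ iff neighbours), simple eigenvalue $1$, other eigenvalues in $(-1,1)$, $\beta\in(0,1)$ its second largest eigenvalue magnitude. $x^\star$ is the minimizer of $h=\sum_if_i$. $L=\max_iL_i$, $\mu_{\bar f}=\frac1n\sum_i\mu_i$, $L_{\bar f}=\frac1n\sum_iL_i$, $c_2=\frac{2\mu_{\bar f}L_{\bar f}}{\mu_{\bar f}+L_{\bar f}}$, $c_4=\frac{2}{\mu_{\bar f}+L_{\bar f}}$, $D=\|\mathbf{y}_0-\mathbf{u}^\star\|+\frac{\nu+4}{\nu}\|\mathbf{u}^\star\|$, $\mathbf{u}^\star=(\arg\min f_1;\ldots;\arg\min f_n)$, $\nu=2\alpha\min_i\frac{\mu_iL_i}{\mu_i+L_i}$. *)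

(* Defs.v *)
From mathcomp Require Import all_boot.
From Stdlib Require Import Reals Relations.
Set Implicit Arguments. Unset Strict Implicit.
Open Scope R_scope.

Definition vec (p : nat) := 'I_p -> R.
Definition vadd p (u v : vec p) : vec p := fun l => u l + v l.
Definition vsub p (u v : vec p) : vec p := fun l => u l - v l.
Definition vscale p (a : R) (u : vec p) : vec p := fun l => a * u l.
Definition dot p (u v : vec p) : R := \big[Rplus/0]_(l < p) (u l * v l).
Definition norm p (u : vec p) : R := sqrt (dot u u).

(* stacked vectors in R^{np}: block i is the local vector of agent i *)
Definition snorm n p (z : 'I_n -> vec p) : R :=
  sqrt (\big[Rplus/0]_(i < n) dot (z i) (z i)).

Definition sumI n (F : 'I_n -> R) : R := \big[Rplus/0]_(i < n) F i.
Definition maxI n (F : 'I_n -> R) : R :=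
  match [seq F i | i <- enum 'I_n] with [::] => 0 | a :: s => foldr Rmax a s end.
Definition minI n (F : 'I_n -> R) : R :=
  match [seq F i | i <- enum 'I_n] with [::] => 0 | a :: s => foldr Rmin a s end.

Definition is_gradient p (f : vec p -> R) (g : vec p -> vec p) : Prop :=
  forall x eps, 0 < eps -> exists delta, 0 < delta /\
    forall h, norm h < delta ->
      Rabs (f (vadd x h) - f x - dot (g x) h) <= eps * norm h.

Definition strongly_convex p (mu : R) (f : vec p -> R) : Prop :=
  forall x y t, 0 <= t <= 1 ->
    f (vadd (vscale t x) (vscale (1 - t) y))
      <= t * f x + (1 - t) * f y - mu / 2 * t * (1 - t) * (norm (vsub x y)) ^ 2.

Definition lipschitz p (L : R) (g : vec p -> vec p) : Prop :=
  forall x y, norm (vsub (g x) (g y)) <= L * norm (vsub x y).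

Definition is_minimizer p (f : vec p -> R) (x : vec p) : Prop :=
  forall y, f x <= f y.

Definition mat n := 'I_n -> 'I_n -> R.
Definition mmul n (A B : mat n) : mat n :=
  fun i j => \big[Rplus/0]_(k < n) (A i k * B k j).
Definition mid n : mat n := fun i j => if i == j then 1 else 0.
Fixpoint mpow n (A : mat n) (t : nat) : mat n :=
  match t with O => @mid n | S t' => mmul A (mpow A t') end.

Definition is_eigenvalue n (W : mat n) (lam : R) : Prop :=
  exists v : 'I_n -> R, (exists i, v i <> 0) /\
    forall i, \big[Rplus/0]_(j < n) (W i j * v j) = lam * v i.

Definition sym_mat n (W : mat n) := forall i j, W i j = W j i.
Definition doubly_stochastic n (W : mat n) :=
  (forall i j, 0 <= W i j) /\
  (forall i, \big[Rplus/0]_(j < n) W i j = 1) /\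
  (forall j, \big[Rplus/0]_(i < n) W i j = 1).
Definition neighbours n (W : mat n) (i j : 'I_n) : Prop := i <> j /\ 0 < W i j.
Definition connected_net n (W : mat n) :=
  forall i j, clos_refl_trans _ (@neighbours n W) i j.
Definition simple_eig1 n (W : mat n) :=
  forall v : 'I_n -> R,
    (forall i, \big[Rplus/0]_(j < n) (W i j * v j) = v i) ->
    exists c, forall i, v i = c.
Definition second_eig_mag n (W : mat n) (beta : R) :=
  (exists lam, is_eigenvalue W lam /\ lam <> 1 /\ Rabs lam = beta) /\
  (forall lam, is_eigenvalue W lam -> lam <> 1 -> Rabs lam <= beta).

(* Main.v *)
Require Import Defs.
From HB Require Import structures.
From mathcomp Require Import all_boot.
From Stdlib Require Import Reals Lra Psatz FunctionalExtensionality Classical.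
Open Scope R_scope.
Set Implicit Arguments. Unset Strict Implicit.


Lemma RplusA : associative Rplus. Proof. move=> *; ring. Qed.
Lemma RplusC : commutative Rplus. Proof. move=> *; ring. Qed.
Lemma Rplus0 : left_id 0 Rplus. Proof. move=> *; ring. Qed.
Lemma Rmul0l : left_zero 0 Rmult. Proof. move=> *; ring. Qed.
Lemma Rmul0r : right_zero 0 Rmult. Proof. move=> *; ring. Qed.
Lemma RmulDl : left_distributive Rmult Rplus. Proof. move=> *; ring. Qed.
Lemma RmulDr : right_distributive Rmult Rplus. Proof. move=> *; ring. Qed.
HB.instance Definition _ := Monoid.isComLaw.Build R 0 Rplus RplusA RplusC Rplus0.
HB.instance Definition _ := Monoid.isMulLaw.Build R 0 Rmult Rmul0l Rmul0r.
HB.instance Definition _ := Monoid.isAddLaw.Build R Rmult Rplus RmulDl RmulDr.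

Lemma sq_le_aux a b : 0 <= b -> a * a <= b * b -> a <= b.
Proof. intros H1 H2. destruct (Rle_dec a b) as [h|h]; auto. nra. Qed.

Section G.
Variable I : finType.
Definition gsum (F : I -> R) := \big[Rplus/0]_(k : I) F k.
Definition gdot (u v : I -> R) := gsum (fun k => u k * v k).

Lemma gsum_ge0 F : (forall k, 0 <= F k) -> 0 <= gsum F.
Proof. move=> H; rewrite /gsum; elim/big_ind: _ => //; [lra| move=> *; lra]. Qed.

Lemma gsum_le F G : (forall k, F k <= G k) -> gsum F <= gsum G.
Proof. move=> H; rewrite /gsum; elim/big_ind2: _ => //; [lra| move=> *; lra]. Qed.

Lemma gsum_add F G : gsum (fun k => F k + G k) = gsum F + gsum G.
Proof. by rewrite /gsum big_split. Qed.

Lemma gsum_scal c F : gsum (fun k => c * F k) = c * gsum F.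
Proof. by rewrite /gsum big_distrr. Qed.

Lemma gsum_opp F : gsum (fun k => - F k) = - gsum F.
Proof. 
have -> : (fun k => - F k) = (fun k => (-1) * F k) by apply: functional_extensionality => k; ring.
rewrite gsum_scal; ring. Qed.

Lemma gsum_sub F G : gsum (fun k => F k - G k) = gsum F - gsum G.
Proof. rewrite /Rminus -gsum_opp -gsum_add //. Qed.

Lemma gsum_ext F G : (forall k, F k = G k) -> gsum F = gsum G.
Proof. by move=> H; rewrite /gsum; apply: eq_bigr. Qed.

Lemma gsum_term F k : (forall k, 0 <= F k) -> F k <= gsum F.
Proof.
move=> H; rewrite /gsum (bigD1 k) //=.
have : 0 <= \big[Rplus/0]_(i | i != k) F i by elim/big_ind: _ => //; [lra| move=> *; lra].
lra. Qed.

Lemma gsum_eq0 F : (forall k, 0 <= F k) -> gsum F = 0 -> forall k, F k = 0.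
Proof. move=> H H0 k; have := gsum_term k H; have := H k; lra. Qed.

Lemma gdot_comm u v : gdot u v = gdot v u.
Proof. apply: gsum_ext => k; ring. Qed.

Lemma gdot_ge0 u : 0 <= gdot u u.
Proof. apply: gsum_ge0 => k; exact: Rle_0_sqr. Qed.

Lemma gdot_CS u v : gdot u v * gdot u v <= gdot u u * gdot v v.
Proof.
have key : forall s, 0 <= gdot u u - 2 * s * gdot u v + s * s * gdot v v.
  move=> s.
  have -> : gdot u u - 2 * s * gdot u v + s * s * gdot v v =
     gsum (fun k => (u k - s * v k) * (u k - s * v k)).
    rewrite /gdot -!gsum_scal -gsum_sub -gsum_add; apply: gsum_ext => k; ring.
  apply: gsum_ge0 => k; exact: Rle_0_sqr.
have hu := gdot_ge0 u; have hv := gdot_ge0 v.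
case: (Req_dec (gdot v v) 0) => Hv.
  rewrite Hv.
  case: (Req_dec (gdot u v) 0) => Huv; first by rewrite Huv; lra.
  have k2 := key ((gdot u u + 1) / (2 * gdot u v)).
  rewrite Hv in k2.
  have e : 2 * ((gdot u u + 1) / (2 * gdot u v)) * gdot u v = gdot u u + 1 by field.
  lra.
have hv' : 0 < gdot v v by lra.
have k2 := key (gdot u v / gdot v v).
have e1 : gdot u v / gdot v v * (gdot u v / gdot v v) * gdot v v = gdot u v * gdot u v / gdot v v by field; lra.
have e2 : 2 * (gdot u v / gdot v v) * gdot u v = 2 * (gdot u v * gdot u v / gdot v v) by field; lra.
rewrite e1 e2 in k2.
have h : gdot u v * gdot u v / gdot v v <= gdot u u by lra.
have h2 : gdot u v * gdot u v = (gdot u v * gdot u v / gdot v v) * gdot v v by field; lra.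
rewrite h2; apply Rmult_le_compat_r; lra.
Qed.

Definition gnrm u := sqrt (gdot u u).

Lemma gnrm_ge0 u : 0 <= gnrm u.
Proof. apply sqrt_pos. Qed.

Lemma gnrm_sq u : gnrm u * gnrm u = gdot u u.
Proof. apply sqrt_sqrt, gdot_ge0. Qed.

Lemma gdot_le_norm u v : gdot u v <= gnrm u * gnrm v.
Proof.
have := gdot_CS u v; rewrite -(gnrm_sq u) -(gnrm_sq v).
have := gnrm_ge0 u; have := gnrm_ge0 v.
move: (gdot u v) (gnrm u) (gnrm v) => a b c; intros; apply sq_le_aux; nra.
Qed.

Lemma gnrm_triangle u v : gnrm (fun k => u k + v k) <= gnrm u + gnrm v.
Proof.
apply: Rsqr_incr_0_var; last by have := gnrm_ge0 u; have := gnrm_ge0 v; lra.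
rewrite /Rsqr gnrm_sq.
have -> : gdot (fun k => u k + v k) (fun k => u k + v k) = gdot u u + 2 * gdot u v + gdot v v.
  rewrite /gdot -gsum_scal -!gsum_add; apply: gsum_ext => k; ring.
have := gdot_le_norm u v; rewrite -(gnrm_sq u) -(gnrm_sq v).
move: (gdot u v) (gnrm u) (gnrm v) => a b c; lra.
Qed.

Lemma gnrm_triangle_sub u v : gnrm (fun k => u k - v k) <= gnrm u + gnrm v.
Proof.
have := gnrm_triangle u (fun k => - v k).
have -> : gnrm (fun k => - v k) = gnrm v by rewrite /gnrm /gdot; congr sqrt; apply: gsum_ext => k; ring.
by have -> : (fun k => u k + - v k) = (fun k => u k - v k).
Qed.

Lemma gnrm_le_sq u v : gdot u u <= gdot v v -> gnrm u <= gnrm v.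
Proof. move=> h; apply sqrt_le_1_alt, h. Qed.

End G.


Lemma dot_gdot p (u v : vec p) : dot u v = gdot u v.
Proof. reflexivity. Qed.
Lemma norm_gnrm p (u : vec p) : norm u = gnrm u.
Proof. reflexivity. Qed.

Lemma dot_l3 p (w a b e : vec p) d1 d2 d3 :
  dot w (fun l => d1 * a l + d2 * b l + d3 * e l) = d1 * dot w a + d2 * dot w b + d3 * dot w e.
Proof. rewrite !dot_gdot /gdot -!gsum_scal -!gsum_add; apply: gsum_ext => k; ring. Qed.

Lemma dot_r3 p (w a b e : vec p) d1 d2 d3 :
  dot (fun l => d1 * a l + d2 * b l + d3 * e l) w = d1 * dot a w + d2 * dot b w + d3 * dot e w.
Proof. rewrite !dot_gdot /gdot -!gsum_scal -!gsum_add; apply: gsum_ext => k; ring. Qed.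

Lemma dot_lin3 p (a b e : vec p) c1 c2 c3 d1 d2 d3 :
  dot (fun l => c1 * a l + c2 * b l + c3 * e l) (fun l => d1 * a l + d2 * b l + d3 * e l) =
  c1*d1*dot a a + (c1*d2 + c2*d1)*dot a b + (c1*d3 + c3*d1)*dot a e + c2*d2*dot b b
  + (c2*d3+c3*d2)*dot b e + c3*d3*dot e e.
Proof. rewrite !dot_gdot /gdot -!gsum_scal -!gsum_add; apply: gsum_ext => k; ring. Qed.

Lemma dot_comm p (u v : vec p) : dot u v = dot v u.
Proof. apply gdot_comm. Qed.
Lemma dot_ge0 p (u : vec p) : 0 <= dot u u.
Proof. apply gdot_ge0. Qed.

Definition FOp p (F : vec p -> R) G mu := forall x z,
  F x + dot (G x) (vsub z x) + mu / 2 * dot (vsub z x) (vsub z x) <= F z.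
Definition DLp p (F : vec p -> R) G L := forall x z,
  F z <= F x + dot (G x) (vsub z x) + L / 2 * dot (vsub z x) (vsub z x).

Section Contr.
Variables (p : nat) (F : vec p -> R) (G : vec p -> vec p) (mu L : R).
Hypotheses (HFO : FOp F G mu) (HDL : DLp F G L).

Lemma half Lc : 0 < Lc -> L <= Lc + mu -> forall x y,
  F x + dot (G x) (vsub y x) + mu / 2 * dot (vsub y x) (vsub y x)
  + / (2 * Lc) * dot (vsub (vsub (G y) (G x)) (vscale mu (vsub y x)))
                     (vsub (vsub (G y) (G x)) (vscale mu (vsub y x))) <= F y.
Proof.
move=> HLc HL x y.
set a := G x; set b := G y; set e := vsub y x.
set z := vsub y (vscale (/ Lc) (vsub (vsub b a) (vscale mu e))).
have h1 := HFO x z; have h2 := HDL y z.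
have Ezx : vsub z x = (fun l => / Lc * a l + (- / Lc) * b l + (1 + mu / Lc) * e l).
  apply: functional_extensionality => l; rewrite /z /e /vsub /vscale; field; lra.
have Ezy : vsub z y = (fun l => / Lc * a l + (- / Lc) * b l + (mu / Lc) * e l).
  apply: functional_extensionality => l; rewrite /z /e /vsub /vscale; field; lra.
have Ev : vsub (vsub b a) (vscale mu e) = (fun l => (-1) * a l + 1 * b l + (- mu) * e l).
  apply: functional_extensionality => l; rewrite /vsub /vscale; ring.
rewrite Ezx in h1; rewrite Ezy in h2; rewrite Ev.
rewrite !dot_lin3 !dot_l3 in h1 h2 *.
rewrite ?(dot_comm b a) ?(dot_comm e a) ?(dot_comm e b) in h1 h2 *.
move: h1 h2 (dot_ge0 (vsub z y)).
rewrite Ezy dot_lin3 ?(dot_comm b a) ?(dot_comm e a) ?(dot_comm e b).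
move: (dot a a) (dot a b) (dot a e) (dot b b) (dot b e) (dot e e) (F x) (F y) (F z) => aa ab ae bb be ee Fx Fy Fz.
move=> h1 h2 X4.
set q := (/ Lc * / Lc * aa + _ * ab + (/ Lc * (mu / Lc) + _) * ae + _ + _ + _) in h2 X4.
have h3 : L / 2 * q <= (Lc + mu) / 2 * q by apply Rmult_le_compat_r; lra.
have E : Fx + ae + mu / 2 * ee +
  / (2 * Lc) *
  (-1 * -1 * aa + (-1 * 1 + 1 * -1) * ab + (-1 * - mu + - mu * -1) * ae +
   1 * 1 * bb + (1 * - mu + - mu * 1) * be + - mu * - mu * ee) =
    Fx + (/ Lc * aa + - / Lc * ab + (1 + mu / Lc) * ae) +
    mu / 2 *
    (/ Lc * / Lc * aa + (/ Lc * - / Lc + - / Lc * / Lc) * ab +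
     (/ Lc * (1 + mu / Lc) + (1 + mu / Lc) * / Lc) * ae +
     - / Lc * - / Lc * bb +
     (- / Lc * (1 + mu / Lc) + (1 + mu / Lc) * - / Lc) * be +
     (1 + mu / Lc) * (1 + mu / Lc) * ee)
   - (/ Lc * ab + - / Lc * bb + mu / Lc * be) - (Lc + mu) / 2 * q.
  rewrite /q; field; lra.
rewrite E; lra.
Qed.

Lemma coco Lc : 0 < Lc -> L <= Lc + mu -> forall x y,
  dot (vsub (G x) (G y)) (vsub (G x) (G y)) - 2 * mu * dot (vsub (G x) (G y)) (vsub x y)
  + mu * mu * dot (vsub x y) (vsub x y)
  <= Lc * (dot (vsub (G x) (G y)) (vsub x y) - mu * dot (vsub x y) (vsub x y)).
Proof.
move=> HLc HL x y.
have h1 := half HLc HL x y; have h2 := half HLc HL y x.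
have E1 : vsub y x = (fun l => 0 * G x l + 0 * G y l + (-1) * vsub x y l).
  apply: functional_extensionality => l; rewrite /vsub; ring.
rewrite E1 in h1 h2.
move: h1 h2; move: (F x) (F y) (vsub x y) (G x) (G y) => Fx Fy e a b h1 h2.
have E2 : e = (fun l => 0 * a l + 0 * b l + 1 * e l).
  apply: functional_extensionality => l; ring.
have E3 : vsub (vsub b a) (vscale mu (fun l => 0 * a l + 0 * b l + (-1) * e l)) = (fun l => (-1) * a l + 1 * b l + mu * e l).
  apply: functional_extensionality => l; rewrite /vsub /vscale; ring.
have E4 : vsub (vsub a b) (vscale mu e) = (fun l => 1 * a l + (-1) * b l + (- mu) * e l).
  apply: functional_extensionality => l; rewrite /vsub /vscale; ring.
have E5 : vsub a b = (fun l => 1 * a l + (-1) * b l + 0 * e l).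
  apply: functional_extensionality => l; rewrite /vsub; ring.
rewrite E3 in h1; rewrite E4 in h2; rewrite E5.
rewrite !dot_lin3 in h1 h2 *.
rewrite ?dot_l3 ?dot_r3 in h1 h2 *.
rewrite ?(dot_comm b a) ?(dot_comm e a) ?(dot_comm e b) in h1 h2 *.
move: h1 h2.
move: (dot a a) (dot a b) (dot a e) (dot b b) (dot b e) (dot e e) => aa ab ae bb be ee.
move=> h1 h2.
set V := aa - 2 * ab + bb - 2 * mu * ae + 2 * mu * be + mu * mu * ee.
have hV : / Lc * V <= ae - be - mu * ee.
  have e7 : / (2 * Lc) = / 2 * / Lc by field; lra.
  rewrite e7 in h1 h2. rewrite /V. 
  move: (/ Lc) h1 h2 => il h1 h2; nra.
have : Lc * (/ Lc * V) <= Lc * (ae - be - mu * ee) by apply Rmult_le_compat_l; lra.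
have -> : Lc * (/ Lc * V) = V by field; lra.
rewrite /V; move=> h; ring_simplify; ring_simplify in h; lra.
Qed.
End Contr.

Lemma pos_lim_aux X Y : 0 <= Y -> (forall Lc, 0 < Lc -> Y <= Lc * X) -> Y = 0.
Proof.
move=> HY H.
case: (Rle_dec X 0) => hX.
  have := H 1 Rlt_0_1; lra.
case: (Req_dec Y 0) => // hY.
have h := H (Y / (2 * X)) ltac:(apply Rdiv_lt_0_compat; lra).
have : Y / (2 * X) * X = Y / 2 by field; lra.
lra.
Qed.

Section Contr2.
Variables (p : nat) (F : vec p -> R) (G : vec p -> vec p) (mu L alpha : R).
Hypotheses (HFO : FOp F G mu) (HDL : DLp F G L).
Hypotheses (Hmu : 0 < mu) (HL : 0 < L) (Ha : 0 < alpha) (Ha2 : alpha <= 2 / (mu + L)).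

Lemma contract x y :
  dot (vsub (vsub x (vscale alpha (G x))) (vsub y (vscale alpha (G y))))
      (vsub (vsub x (vscale alpha (G x))) (vsub y (vscale alpha (G y))))
  <= (1 - 2 * alpha * mu * L / (mu + L)) * dot (vsub x y) (vsub x y).
Proof.
have hN : (mu - L) * dot (vsub x y) (vsub x y) <= 0.
  have := HFO y x; have := HDL y x; lra.
have hcoco := coco HFO HDL.
have hY := dot_ge0 (vsub (vsub (G x) (G y)) (vscale mu (vsub x y))).
have hCS := gdot_CS (vsub (G x) (G y)) (vsub x y).
have hQ := dot_ge0 (vsub (G x) (G y)).
have E1 : vsub (vsub x (vscale alpha (G x))) (vsub y (vscale alpha (G y))) =
   (fun l => (- alpha) * G x l + alpha * G y l + 1 * vsub x y l).
  apply: functional_extensionality => l; rewrite /vsub /vscale; ring.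
have E2 : vsub (vsub (G x) (G y)) (vscale mu (vsub x y)) =
   (fun l => 1 * G x l + (-1) * G y l + (- mu) * vsub x y l).
  apply: functional_extensionality => l; rewrite /vsub /vscale; ring.
have E3 : vsub (G x) (G y) = (fun l => 1 * G x l + (-1) * G y l + 0 * vsub x y l).
  apply: functional_extensionality => l; rewrite /vsub; ring.
rewrite E2 in hY; rewrite E1; rewrite -!dot_gdot E3 in hCS hQ.
have {}hcoco : forall Lc, 0 < Lc -> L <= Lc + mu ->
  dot (fun l => 1 * G x l + (-1) * G y l + 0 * vsub x y l) (fun l => 1 * G x l + (-1) * G y l + 0 * vsub x y l)
  - 2 * mu * dot (fun l => 1 * G x l + (-1) * G y l + 0 * vsub x y l) (vsub x y)
  + mu * mu * dot (vsub x y) (vsub x y)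
  <= Lc * (dot (fun l => 1 * G x l + (-1) * G y l + 0 * vsub x y l) (vsub x y) - mu * dot (vsub x y) (vsub x y)).
  by move=> Lc h1 h2; rewrite -E3; apply: hcoco.
have hN0 := dot_ge0 (vsub x y).
move: hN0 hN hcoco hY hCS hQ; rewrite !dot_lin3 ?dot_r3.
rewrite ?(dot_comm (G y) (G x)) ?(dot_comm (vsub x y) (G x)) ?(dot_comm (vsub x y) (G y)).
move: (dot (G x) (G x)) (dot (G x) (G y)) (dot (G x) (vsub x y)) (dot (G y) (G y))
  (dot (G y) (vsub x y)) (dot (vsub x y) (vsub x y)) => aa ab ae bb be N.
move=> hN0 hN hcoco hY hCS hQ.
set P := 1 * ae + -1 * be + 0 * N.
set Q := 1 * 1 * aa + (1 * -1 + -1 * 1) * ab + (1 * 0 + 0 * 1) * ae + -1 * -1 * bb + (-1 * 0 + 0 * -1) * be + 0 * 0 * N.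
have hP : P = ae - be by rewrite /P; ring.
have hQQ : Q = aa - 2 * ab + bb by rewrite /Q; ring.
have hL : - alpha * - alpha * aa + (- alpha * alpha + alpha * - alpha) * ab + (- alpha * 1 + 1 * - alpha) * ae +
  alpha * alpha * bb + (alpha * 1 + 1 * alpha) * be + 1 * 1 * N = N - 2 * alpha * P + alpha * alpha * Q.
  rewrite hP hQQ; ring.
rewrite hL.
have hY' : 0 <= Q - 2 * mu * P + mu * mu * N.
  move: hY; rewrite hP hQQ; move=> hY; lra.
have hco : forall Lc, 0 < Lc -> L <= Lc + mu -> Q - 2 * mu * P + mu * mu * N <= Lc * (P - mu * N).
  move=> Lc h1 h2; have := hcoco Lc h1 h2; rewrite /P /Q; lra.
have {}hCS : P * P <= Q * N by exact hCS.
have {}hQ : 0 <= Q by exact hQ.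
clear hcoco hY hL. clearbody P Q.
have hml : 0 < mu + L by lra.
have hal : alpha * (mu + L) <= 2.
  have := Rmult_le_compat_r (mu + L) _ _ ltac:(lra) Ha2.
  have -> : 2 / (mu + L) * (mu + L) = 2 by field; lra.
  done.
case: (Rlt_le_dec mu L) => hmL.
  have h := hco (L - mu) ltac:(lra) ltac:(lra).
  have h2 : Q + mu * L * N <= (mu + L) * P by nra.
  have h3 : alpha * alpha * Q * (mu + L) <= alpha * 2 * Q.
    have hq : 0 <= alpha * Q by apply Rmult_le_pos; lra.
    have := Rmult_le_compat_l _ _ _ hq hal; lra.
  have h4 : 2 * alpha * mu * L / (mu + L) * N * (mu + L) = 2 * alpha * mu * L * N by field; lra.
  apply (Rmult_le_reg_r (mu + L)); first lra.
  have h5 : (N - 2 * alpha * P + alpha * alpha * Q) * (mu + L) <= (N * (mu + L)) - 2 * alpha * mu * L * N.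
    nra.
  have h6 : (1 - 2 * alpha * mu * L / (mu + L)) * N * (mu + L) = N * (mu + L) - 2 * alpha * mu * L * N.
    field; lra.
  lra.
have hY0 : Q - 2 * mu * P + mu * mu * N = 0.
  apply: (pos_lim_aux (X := P - mu * N)) => // Lc hLc; apply: hco => //; lra.
case: (Req_dec mu L) => hmL2.
  rewrite -hmL2.
  have hPN : P = mu * N.
    have : (P - mu * N) * (P - mu * N) <= 0.
      nra.
    nra.
  have hQN : Q = mu * mu * N by nra.
  have e : 2 * alpha * mu * mu / (mu + mu) = alpha * mu by field; lra.
  rewrite e hPN hQN.
  have : alpha * mu <= 1.
    rewrite -hmL2 in hal; lra.
  move=> h.
  have hp : 0 <= alpha * mu * N by apply Rmult_le_pos; [apply Rmult_le_pos|]; lra.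
  have := Rmult_le_compat_l _ _ _ hp h; lra.
have hN00 : N = 0.
  have : mu - L > 0 by lra.
  nra.
have hP0 : P = 0.
  rewrite hN00 in hCS; nra.
have hQ0 : Q = 0 by nra.
rewrite hN00 hP0 hQ0; lra.
Qed.
End Contr2.


Lemma norm_ge0 p (u : vec p) : 0 <= norm u.
Proof. apply sqrt_pos. Qed.

Lemma norm_sq p (u : vec p) : norm u * norm u = dot u u.
Proof. apply gnrm_sq. Qed.

Lemma norm_pow2 p (u : vec p) : norm u ^ 2 = dot u u.
Proof. rewrite -norm_sq; ring. Qed.

Lemma dot_scaler p (u v : vec p) c : dot u (vscale c v) = c * dot u v.
Proof. rewrite !dot_gdot /gdot -gsum_scal; apply: gsum_ext => k; rewrite /vscale; ring. Qed.

Lemma dot_subl p (u v w : vec p) : dot (vsub u v) w = dot u w - dot v w.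
Proof. rewrite !dot_gdot /gdot -gsum_sub; apply: gsum_ext => k; rewrite /vsub; ring. Qed.

Lemma norm_scale p (u : vec p) c : norm (vscale c u) = Rabs c * norm u.
Proof.
rewrite /norm.
have -> : dot (vscale c u) (vscale c u) = (c * c) * dot u u.
  rewrite !dot_gdot /gdot -gsum_scal; apply: gsum_ext => k; rewrite /vscale; ring.
rewrite sqrt_mult; [|nra|apply dot_ge0].
by rewrite -/(Rsqr c) sqrt_Rsqr_abs.
Qed.

Lemma dot_le_norm p (u v : vec p) : dot u v <= norm u * norm v.
Proof. apply gdot_le_norm. Qed.

Lemma small_aux A B C : 0 <= B -> 0 <= C ->
  (forall eps, 0 < eps -> exists t0, 0 < t0 /\ forall t, 0 < t < t0 -> A <= eps * B + t * C) -> A <= 0.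
Proof.
move=> hB hC H.
case: (Rle_dec A 0) => // hA.
have hA' : 0 < A by lra.
have [t0 [ht0 Ht]] := H (A / (2 * (B + 1))) ltac:(apply Rdiv_lt_0_compat; lra).
set t := Rmin (t0 / 2) (A / (2 * (C + 1))).
have ht1 : 0 < t by apply Rmin_glb_lt; apply Rdiv_lt_0_compat; lra.
have ht2 : t < t0 by have := Rmin_l (t0/2) (A / (2 * (C + 1))); rewrite -/t; lra.
have ht3 : t <= A / (2 * (C + 1)) by apply Rmin_r.
have h := Ht t (conj ht1 ht2).
have h1 : A / (2 * (B + 1)) * B < A / 2.
  have e : A / (2 * (B + 1)) * B = A / 2 * (B / (B + 1)) by field; lra.
  rewrite e.
  have : B / (B + 1) < 1 by apply (Rmult_lt_reg_r (B + 1)); [lra|]; field_simplify; lra.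
  move=> hb; have : A / 2 * (B / (B + 1)) < A / 2 * 1 by apply Rmult_lt_compat_l; lra.
  lra.
have h2 : t * C < A / 2.
  have : t * C <= A / (2 * (C + 1)) * C by apply Rmult_le_compat_r; lra.
  have e : A / (2 * (C + 1)) * C = A / 2 * (C / (C + 1)) by field; lra.
  rewrite e.
  have : C / (C + 1) < 1 by apply (Rmult_lt_reg_r (C + 1)); [lra|]; field_simplify; lra.
  move=> hb; have : A / 2 * (C / (C + 1)) < A / 2 * 1 by apply Rmult_lt_compat_l; lra.
  lra.
lra.
Qed.

Lemma FO_of p (F : vec p -> R) G mu : 0 <= mu -> is_gradient F G -> strongly_convex mu F -> FOp F G mu.
Proof.
move=> hmu HG HSC x z.
set d := vsub z x.
suff : F x + dot (G x) d + mu / 2 * dot d d - F z <= 0 by lra.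
apply: (small_aux (B := norm d) (C := mu / 2 * dot d d)).
- apply norm_ge0.
- have := dot_ge0 d; nra.
move=> eps heps.
have [del [hdel H]] := HG x eps heps.
have hnd := norm_ge0 d.
exists (Rmin 1 (del / (norm d + 1))); split.
  apply Rmin_glb_lt; [lra| apply Rdiv_lt_0_compat; lra].
move=> t [ht0 ht1].
have ht1' : t < 1 by have := Rmin_l 1 (del / (norm d + 1)); lra.
have ht2 : t < del / (norm d + 1) by have := Rmin_r 1 (del / (norm d + 1)); lra.
have Hs := HSC z x t (conj (Rlt_le _ _ ht0) (Rlt_le _ _ ht1')).
rewrite norm_pow2 in Hs.
have E : vadd (vscale t z) (vscale (1 - t) x) = vadd x (vscale t d).
  apply: functional_extensionality => l; rewrite /vadd /vscale /d /vsub; ring.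
rewrite E -/d in Hs.
have Hn : norm (vscale t d) = t * norm d by rewrite norm_scale Rabs_pos_eq; lra.
have Hnd : norm (vscale t d) < del.
  rewrite Hn.
  have : t * (norm d + 1) < del.
    have := Rmult_lt_compat_r (norm d + 1) _ _ ltac:(lra) ht2.
    have -> : del / (norm d + 1) * (norm d + 1) = del by field; lra.
    done.
  nra.
have Hh := H _ Hnd.
rewrite dot_scaler Hn in Hh.
have Hh' : (F (vadd x (vscale t d)) - F x - t * dot (G x) d <= eps * (t * norm d)) /\
   - (F (vadd x (vscale t d)) - F x - t * dot (G x) d) <= eps * (t * norm d).
  split; [have := Rle_abs (F (vadd x (vscale t d)) - F x - t * dot (G x) d); lra|].
  have := Rle_abs (- (F (vadd x (vscale t d)) - F x - t * dot (G x) d)); rewrite Rabs_Ropp; lra.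
have hk : t * (F x + dot (G x) d + mu / 2 * dot d d - F z) <= t * (eps * norm d + t * (mu / 2 * dot d d)).
  move: Hs Hh'; move: (F (vadd x (vscale t d))) (F x) (F z) (dot (G x) d) (dot d d) (norm d) => a b c e N nd.
  move=> h1 [h2 h3].
  lra.
apply (Rmult_le_reg_l t); lra.
Qed.

Lemma deriv_poly c0 a s : derivable_pt_lim (fun s => s * c0 + a * (s * s)) s (c0 + a * (2 * s)).
Proof.
pose proof (derivable_pt_lim_plus (mult_fct id (fct_cte c0)) (mult_fct (fct_cte a) (mult_fct id id)) s _ _
  (derivable_pt_lim_mult id (fct_cte c0) s _ _ (derivable_pt_lim_id s) (derivable_pt_lim_const c0 s))
  (derivable_pt_lim_mult (fct_cte a) (mult_fct id id) s _ _ (derivable_pt_lim_const a s)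
     (derivable_pt_lim_mult id id s _ _ (derivable_pt_lim_id s) (derivable_pt_lim_id s)))) as H.
replace (c0 + a * (2 * s)) with (1 * c0 + s * 0 + (0 * (s * s) + a * (1 * s + s * 1))) by ring.
exact H.
Qed.

Lemma deriv_line p (F : vec p -> R) G x d s : is_gradient F G ->
  derivable_pt_lim (fun s => F (vadd x (vscale s d))) s (dot (G (vadd x (vscale s d))) d).
Proof.
move=> HG eps heps.
set y := vadd x (vscale s d).
have hnd := norm_ge0 d.
have [del [hdel H]] := HG y (eps / 2 / (norm d + 1)) ltac:(apply Rdiv_lt_0_compat; lra).
have hdp : 0 < del / (norm d + 1) by apply Rdiv_lt_0_compat; lra.
exists (mkposreal _ hdp) => h hh0 hh /=.
have E : vadd x (vscale (s + h) d) = vadd y (vscale h d).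
  apply: functional_extensionality => l; rewrite /y /vadd /vscale; ring.
rewrite E.
have Hn : norm (vscale h d) = Rabs h * norm d by rewrite norm_scale.
have hah : 0 < Rabs h by apply Rabs_pos_lt.
have Hnd : norm (vscale h d) < del.
  rewrite Hn.
  have : Rabs h * (norm d + 1) < del.
    have := Rmult_lt_compat_r (norm d + 1) _ _ ltac:(lra) hh.
    have -> : del / (norm d + 1) * (norm d + 1) = del by field; lra.
    done.
  nra.
have Hh := H _ Hnd.
rewrite dot_scaler Hn in Hh.
have e : (F (vadd y (vscale h d)) - F y) / h - dot (G y) d =
         (F (vadd y (vscale h d)) - F y - h * dot (G y) d) / h by field.
rewrite e /Rdiv Rabs_mult Rabs_inv.
apply (Rmult_lt_reg_r (Rabs h)) => //.
have -> : Rabs (F (vadd y (vscale h d)) - F y - h * dot (G y) d) * / Rabs h * Rabs h =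
   Rabs (F (vadd y (vscale h d)) - F y - h * dot (G y) d) by field; lra.
apply (Rle_lt_trans _ _ _ Hh).
have : eps / 2 / (norm d + 1) * (Rabs h * norm d) = (eps * Rabs h) * (norm d / (norm d + 1) / 2) by field; lra.
move=> ->.
have : norm d / (norm d + 1) / 2 < 1.
  apply (Rmult_lt_reg_r (2 * (norm d + 1))); [lra|]; field_simplify; lra.
move=> hb.
have hp : 0 < eps * Rabs h by apply Rmult_lt_0_compat.
have := Rmult_lt_compat_l _ _ _ hp hb; lra.
Qed.

Lemma DL_of p (F : vec p -> R) G L : is_gradient F G -> lipschitz L G -> DLp F G L.
Proof.
move=> HG HL x z.
set d := vsub z x.
set c0 := dot (G x) d.
set N := dot d d.
set psi := fun s => F (vadd x (vscale s d)) - (s * c0 + L / 2 * N * (s * s)).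
set psi' := fun s => dot (G (vadd x (vscale s d))) d - (c0 + L / 2 * N * (2 * s)).
have Hd : forall s, derivable_pt_lim psi s (psi' s).
  move=> s; rewrite /psi /psi'.
  apply: (derivable_pt_lim_minus (fun s => F (vadd x (vscale s d))) (fun s => s * c0 + L / 2 * N * (s * s))).
  - exact: deriv_line.
  - exact: deriv_poly.
have [c [Hc Hc01]] := MVT_cor2 psi psi' 0 1 Rlt_0_1 (fun c _ => Hd c).
have E1 : vadd x (vscale 1 d) = z.
  apply: functional_extensionality => l; rewrite /vadd /vscale /d /vsub; ring.
have E0 : vadd x (vscale 0 d) = x.
  apply: functional_extensionality => l; rewrite /vadd /vscale; ring.
rewrite /psi E1 E0 in Hc.
suff : psi' c <= 0.
  move=> h; rewrite -/c0 -/N.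
  clear Hd; clearbody psi'; clear psi.
  move: Hc h; move: (psi' c) (F z) (F x) c0 N => a b e c1 n; lra.
rewrite /psi'.
have E2 : vsub (vadd x (vscale c d)) x = vscale c d.
  apply: functional_extensionality => l; rewrite /vadd /vscale /vsub; ring.
have h1 := HL (vadd x (vscale c d)) x.
rewrite E2 norm_scale Rabs_pos_eq in h1; last lra.
have h2 := dot_le_norm (vsub (G (vadd x (vscale c d))) (G x)) d.
rewrite dot_subl in h2.
have hnd := norm_ge0 d.
have h3 : norm (vsub (G (vadd x (vscale c d))) (G x)) * norm d <= L * (c * norm d) * norm d.
  by apply Rmult_le_compat_r.
have hN : N = norm d * norm d by rewrite norm_sq.
rewrite -/c0 in h2.
move: h2 h3 hN; move: (dot (G (vadd x (vscale c d))) d) (norm (vsub (G (vadd x (vscale c d))) (G x))) (norm d) => a b nd.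
move=> h2 h3 hN; rewrite hN; nra.
Qed.

Lemma grad0 p (F : vec p -> R) G L x : 0 < L -> DLp F G L -> is_minimizer F x -> forall l, G x l = 0.
Proof.
move=> hL HDL Hmin.
set z := vsub x (vscale (/ L) (G x)).
have h1 := HDL x z; have h2 := Hmin z.
have E : vsub z x = vscale (- / L) (G x).
  apply: functional_extensionality => l; rewrite /z /vsub /vscale; ring.
rewrite E !dot_scaler in h1.
have E2 : dot (vscale (- / L) (G x)) (G x) = - / L * dot (G x) (G x).
  rewrite dot_comm dot_scaler //.
rewrite E2 in h1.
have hQ := dot_ge0 (G x).
have hQ0 : dot (G x) (G x) = 0.
  move: h1 h2 hQ; move: (dot (G x) (G x)) (F x) (F z) => Q a b h1 h2 hQ.
  have e : L / 2 * (- / L * (- / L * Q)) = / L * Q / 2 by field; lra.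
  rewrite e in h1.
  have : / L * Q <= 0 by lra.
  have hiL : 0 < / L by apply Rinv_0_lt_compat.
  nra.
move=> l.
have := gsum_eq0 (F := fun k => G x k * G x k) (fun k => Rle_0_sqr _) hQ0 l.
move=> /= h; nra.
Qed.


Definition mv n (A : mat n) (w : 'I_n -> R) : 'I_n -> R :=
  fun i => \big[Rplus/0]_(j < n) (A i j * w j).

Section Net.
Variable n : nat.
Implicit Types (A B : mat n) (w v : 'I_n -> R).

Lemma mv_mmul A B w : mv (mmul A B) w = mv A (mv B w).
Proof.
apply: functional_extensionality => i; rewrite /mv /mmul.
under eq_bigr do rewrite big_distrl.
rewrite exchange_big /=; apply: eq_bigr => k _.
rewrite big_distrr /=; apply: eq_bigr => j _; ring.
Qed.

Lemma mv_mid w : mv (@mid n) w = w.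
Proof.
apply: functional_extensionality => i; rewrite /mv /mid.
rewrite (bigD1 i) //= eqxx big1; first ring.
by move=> j /negPf; rewrite eq_sym => ->; ring.
Qed.

Lemma mv_lin A a b w v : mv A (fun i => a * w i + b * v i) = (fun i => a * mv A w i + b * mv A v i).
Proof.
apply: functional_extensionality => i; rewrite /mv.
rewrite !big_distrr /= -big_split /=; apply: eq_bigr => j _; ring.
Qed.

Lemma rowsum_mpow (W : mat n) t : doubly_stochastic W -> forall i, \big[Rplus/0]_(j < n) mpow W t i j = 1.
Proof.
move=> [h0 [hr hc]]; elim: t => [|t IH] i /=.
  rewrite /mid (bigD1 i) //= eqxx big1; first ring.
  by move=> j /negPf; rewrite eq_sym => ->.
rewrite /mmul exchange_big /=.
rewrite -(hr i); apply: eq_bigr => k _; rewrite -big_distrr /= IH; ring.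
Qed.

Lemma colsum_mpow (W : mat n) t : doubly_stochastic W -> forall j, \big[Rplus/0]_(i < n) mpow W t i j = 1.
Proof.
move=> [h0 [hr hc]]; elim: t => [|t IH] j /=.
  rewrite /mid (bigD1 j) //= eqxx big1; first ring.
  by move=> i /negPf ->.
rewrite /mmul exchange_big /=.
rewrite -(IH j); apply: eq_bigr => k _; rewrite -big_distrl /= hc; ring.
Qed.

Lemma nonneg_mpow (W : mat n) t : doubly_stochastic W -> forall i j, 0 <= mpow W t i j.
Proof.
move=> [h0 [hr hc]]; elim: t => [|t IH] i j /=.
  rewrite /mid; case: (i == j); lra.
rewrite /mmul; apply: (gsum_ge0 (I := 'I_n)) => k; apply Rmult_le_pos; auto.
Qed.

Lemma ds_mpow (W : mat n) t : doubly_stochastic W -> doubly_stochastic (mpow W t).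
Proof. move=> h; split; [exact: nonneg_mpow|split; [exact: rowsum_mpow|exact: colsum_mpow]]. Qed.

Lemma sum_mv A w : (forall j, \big[Rplus/0]_(i < n) A i j = 1) -> gsum (mv A w) = gsum w.
Proof.
move=> hc; rewrite /gsum /mv exchange_big /=; apply: eq_bigr => j _.
rewrite -big_distrl /= hc; ring.
Qed.

Lemma mv_const A c : (forall i, \big[Rplus/0]_(j < n) A i j = 1) -> mv A (fun _ => c) = (fun _ => c).
Proof.
move=> hr; apply: functional_extensionality => i; rewrite /mv -big_distrl /= hr; ring.
Qed.

Lemma jensen A w : doubly_stochastic A -> gdot (mv A w) (mv A w) <= gdot w w.
Proof.
move=> [h0 [hr hc]].
have key : forall i, mv A w i * mv A w i <= \big[Rplus/0]_(j < n) (A i j * (w j * w j)).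
  move=> i; set m := mv A w i.
  have e2 : gsum (fun j : 'I_n => A i j * w j) = m by [].
  change (m * m <= gsum (fun j : 'I_n => A i j * (w j * w j))).
  clearbody m.
  have h1 : 0 <= gsum (fun j : 'I_n => A i j * ((w j - m) * (w j - m))).
    apply: (gsum_ge0 (I := 'I_n)) => j; apply Rmult_le_pos; [auto| exact: Rle_0_sqr].
  have e : gsum (fun j : 'I_n => A i j * ((w j - m) * (w j - m))) =
     gsum (fun j : 'I_n => A i j * (w j * w j)) - 2 * m * gsum (fun j : 'I_n => A i j * w j)
     + m * m * gsum (fun j : 'I_n => A i j).
    rewrite -!gsum_scal -gsum_sub -gsum_add; apply: gsum_ext => j; ring.
  have e3 : gsum (fun j : 'I_n => A i j) = 1 by apply hr.
  rewrite e e2 e3 in h1.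
  lra.
apply: Rle_trans; first by apply: (gsum_le (I := 'I_n)); exact: key.
rewrite /gsum exchange_big /=; apply: Req_le; apply: eq_bigr => j _.
rewrite -big_distrl /= hc /gdot /gsum; ring.
Qed.

Lemma sym_mv A u v : (forall i j, A i j = A j i) -> gdot (mv A u) v = gdot u (mv A v).
Proof.
move=> hs; rewrite /gdot /gsum /mv.
under eq_bigr do rewrite big_distrl.
rewrite exchange_big /=; apply: eq_bigr => j _.
rewrite big_distrr /=; apply: eq_bigr => i _; rewrite hs; ring.
Qed.

End Net.

From mathcomp Require Import all_algebra.
From mathcomp Require Import Rstruct.
Open Scope R_scope.


Section M.
Local Open Scope ring_scope.
Definition tmx n (Pm : mat n) : 'M[R]_n := \matrix_(i, k) Pm k i.
Definition rvec n (w : 'I_n -> R) : 'rV[R]_n := \row_k w k.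
Definition detz n (Pm : mat n) : bool := \det (tmx Pm) == 0.
End M.

Lemma mxmv n (Pm : mat n) (w : 'I_n -> R) j :
  (mulmx (rvec w) (tmx Pm)) ord0 j = mv Pm w j.
Proof.
rewrite /rvec /tmx !mxE /mv.
apply: eq_bigr => i _; rewrite !mxE.
by rewrite Rmult_comm.
Qed.

Lemma Rabs_sum n (a : 'I_n -> R) :
  Rabs (\big[Rplus/0]_(j < n) a j) <= \big[Rplus/0]_(j < n) Rabs (a j).
Proof.
elim/big_ind2: _ => [|x1 x2 y1 y2 h1 h2|j _].
- rewrite Rabs_R0; lra.
- have := Rabs_triang x2 y2; lra.
- lra.
Qed.

Lemma abs_le_gnrm n (u : 'I_n -> R) j : Rabs (u j) <= gnrm u.
Proof.
rewrite -sqrt_Rsqr_abs; apply sqrt_le_1_alt.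
rewrite /Rsqr; apply: (gsum_term (F := fun k => u k * u k)) => k; exact: Rle_0_sqr.
Qed.

Lemma singular n (Pm : mat n) :
  (forall eps, 0 < eps -> exists w, gdot w w = 1 /\ gdot (mv Pm w) (mv Pm w) < eps) ->
  exists v : 'I_n -> R, (exists i, v i <> 0) /\ forall i, mv Pm v i = 0.
Proof.
move=> Happ.
set A := tmx Pm.
case: (boolP (detz Pm)) => hd.
  have [r hr0 hrA] := det0P hd.
  exists (fun i => r ord0 i); split.
    apply: NNPP => hn; move/negP: hr0; apply; apply/eqP.
    apply/matrixP => a b; rewrite (ord1 a) mxE.
    apply: NNPP => hb; apply: hn; exists b; exact: hb.
  move=> i.
  have er : r = rvec (fun k => r ord0 k) by apply/matrixP => a b; rewrite (ord1 a) mxE.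
  rewrite -mxmv -er hrA mxE //.
have hu : A \in unitmx by rewrite unitmxE GRing.unitfE.
exfalso.
set B := invmx A.
pose K := fun i : 'I_n => \big[Rplus/0]_(j < n) Rabs (B j i).
pose K2 := gsum (fun i : 'I_n => K i * K i).
have hK2 : 0 <= K2 by apply: gsum_ge0 => i; exact: Rle_0_sqr.
have [w [hw1 hw2]] := Happ (/ (K2 + 1)) ltac:(apply Rinv_0_lt_compat; lra).
set u := mv Pm w.
have hwi : forall i, w i = \big[Rplus/0]_(j < n) (u j * B j i).
  move=> i.
  have := mulmxK hu (rvec w).
  move/matrixP => /(_ ord0 i) h.
  have e : rvec w ord0 i = w i by rewrite /rvec mxE.
  rewrite -e -h mxE.
  apply: eq_bigr => j _; rewrite mxmv //.
have hwK : forall i, w i * w i <= gdot u u * (K i * K i).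
  move=> i.
  have h1 : Rabs (w i) <= gnrm u * K i.
    rewrite hwi; apply: Rle_trans; first exact: Rabs_sum.
    rewrite /K big_distrr /=; apply: (gsum_le (I := 'I_n)) => j.
    rewrite Rabs_mult; apply Rmult_le_compat_r; [exact: Rabs_pos| exact: abs_le_gnrm].
  rewrite -gnrm_sq.
  have := Rabs_pos (w i); have := gnrm_ge0 u.
  have e : w i * w i = Rabs (w i) * Rabs (w i) by rewrite -Rabs_mult Rabs_pos_eq //; exact: Rle_0_sqr.
  rewrite e.
  move: h1; move: (Rabs (w i)) (gnrm u) (K i) => a b c; intros; nra.
have : 1 <= gdot u u * K2.
  rewrite -hw1 /K2 -gsum_scal; apply: gsum_le => i; exact: hwK.
have hu0 := gdot_ge0 u.
have : gdot u u * K2 <= / (K2 + 1) * K2 by apply Rmult_le_compat_r; [exact hK2| left; exact hw2].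
have : / (K2 + 1) * K2 < 1.
  apply (Rmult_lt_reg_r (K2 + 1)); [lra|].
  have -> : / (K2 + 1) * K2 * (K2 + 1) = K2 by field; lra.
  lra.
lra.
Qed.


Lemma gdot_lin2 (I : finType) (p q r s : I -> R) a b c d :
  gdot (fun i => a * p i + b * q i) (fun i => c * r i + d * s i) =
  a * c * gdot p r + a * d * gdot p s + b * c * gdot q r + b * d * gdot q s.
Proof. rewrite /gdot -!gsum_scal -!gsum_add; apply: gsum_ext => k; ring. Qed.

Lemma gsum_const n c : gsum (fun _ : 'I_n => c) = INR n * c.
Proof.
elim: n => [|n IH]; first by rewrite /gsum big_ord0 /=; ring.
rewrite /gsum big_ord_recr /=.
change (gsum (fun _ : 'I_n => c) + c = INR (S n) * c).
rewrite IH S_INR; ring.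
Qed.

Lemma gdot_constl n c (w : 'I_n -> R) : gdot (fun _ => c) w = c * gsum w.
Proof. by rewrite /gdot gsum_scal. Qed.

Lemma sum_sq_le n (w : 'I_n -> R) : gsum w * gsum w <= INR n * gdot w w.
Proof.
have := gdot_CS (fun _ : 'I_n => 1) w.
rewrite gdot_constl.
have -> : gdot (fun _ : 'I_n => 1) (fun _ => 1) = INR n by rewrite /gdot gsum_const; ring.
lra.
Qed.

Section Spec.
Variables (n : nat) (W : mat n) (beta : R).
Hypotheses (HWsym : sym_mat W) (HWds : doubly_stochastic W) (HW1s : simple_eig1 W)
  (Hb : forall lam, is_eigenvalue W lam -> lam <> 1 -> Rabs lam <= beta)
  (hb0 : 0 <= beta) (hn : (0 < n)%nat).

Let hnR : 0 < INR n. Proof. apply lt_0_INR; apply/ltP. done. Qed.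

Definition Qf (w : 'I_n -> R) := gdot (mv W w) (mv W w) - gsum w * gsum w / INR n.

Lemma Qf_le w : Qf w <= gdot w w.
Proof.
rewrite /Qf; have := jensen w HWds.
have : 0 <= gsum w * gsum w / INR n by apply Rmult_le_pos; [exact: Rle_0_sqr| left; apply Rinv_0_lt_compat; exact hnR].
lra.
Qed.

Lemma Qf_ge w : - gdot w w <= Qf w.
Proof.
rewrite /Qf; have := sum_sq_le w; have := gdot_ge0 (mv W w).
have : gsum w * gsum w / INR n <= gdot w w.
  apply (Rmult_le_reg_r (INR n)) => //.
  have -> : gsum w * gsum w / INR n * INR n = gsum w * gsum w by field; lra.
  have := sum_sq_le w; lra.
lra.
Qed.

Lemma Qf_scal c w : Qf (fun i => c * w i) = c * c * Qf w.
Proof.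
rewrite /Qf.
have -> : mv W (fun i => c * w i) = (fun i => c * mv W w i + 0 * mv W w i).
  have -> : (fun i => c * w i) = (fun i => c * w i + 0 * w i).
    by apply: functional_extensionality => i; ring.
  exact: mv_lin.
rewrite gsum_scal.
have -> : (fun i => c * mv W w i + 0 * mv W w i) = (fun i => c * mv W w i).
  by apply: functional_extensionality => i; ring.
rewrite /gdot.
have -> : gsum (fun k => c * mv W w k * (c * mv W w k)) = c * c * gsum (fun k => mv W w k * mv W w k).
  rewrite -gsum_scal; apply: gsum_ext => k; ring.
field; lra.
Qed.

Definition Eset (r : R) := exists w, gdot w w = 1 /\ r = Qf w.

Let i0 : 'I_n := Ordinal hn.

Lemma unit_vec : gdot (fun i => if i == i0 then 1 else 0) (fun i => if i == i0 then 1 else 0) = 1.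
Proof.
rewrite /gdot /gsum (bigD1 i0) //= ?eqxx big1; first ring.
by move=> j /negPf ->; ring.
Qed.

Lemma Eset_bound : bound Eset.
Proof. exists 1 => r [w [hw ->]]; have := Qf_le w; lra. Qed.

Lemma Eset_ne : exists r, Eset r.
Proof. eexists; exists (fun i => if i == i0 then 1 else 0); split; [exact unit_vec| reflexivity]. Qed.

Definition Msup := proj1_sig (completeness Eset Eset_bound Eset_ne).
Lemma Msup_lub : is_lub Eset Msup.
Proof. exact: (proj2_sig (completeness Eset Eset_bound Eset_ne)). Qed.

Lemma prop1 w : Qf w <= Msup * gdot w w.
Proof.
have [hub _] := Msup_lub.
have hN := gdot_ge0 w.
case: (Req_dec (gdot w w) 0) => hN0.
  have hw0 := gsum_eq0 (F := fun k => w k * w k) (fun k => Rle_0_sqr _) hN0.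
  have -> : w = (fun i => 0 * w i).
    apply: functional_extensionality => i; have := hw0 i; move=> /= h; nra.
  rewrite Qf_scal; have -> : gdot (fun i => 0 * w i) (fun i => 0 * w i) = 0.
    rewrite /gdot (gsum_ext (G := fun k => 0 * (w k * w k))); [rewrite gsum_scal; ring| move=> k; ring].
  lra.
have hNp : 0 < gdot w w by lra.
set s := / sqrt (gdot w w).
have hs : s * s = / gdot w w.
  rewrite /s -Rinv_mult sqrt_sqrt //.
have h1 : gdot (fun i => s * w i) (fun i => s * w i) = 1.
  rewrite /gdot.
  have -> : gsum (fun k => s * w k * (s * w k)) = s * s * gdot w w.
    rewrite /gdot -gsum_scal; apply: gsum_ext => k; ring.
  rewrite hs; field; lra.
have := hub _ (ex_intro _ _ (conj h1 erefl)).
rewrite Qf_scal hs.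
move=> h.
have := Rmult_le_compat_r (gdot w w) _ _ (Rlt_le _ _ hNp) h.
have -> : / gdot w w * Qf w * gdot w w = Qf w by field; lra.
lra.
Qed.

Lemma prop2 eps : 0 < eps -> exists w, gdot w w = 1 /\ Msup - eps < Qf w.
Proof.
move=> he; apply: NNPP => hn1.
have [_ hl] := Msup_lub.
have : Msup <= Msup - eps.
  apply: hl => r [w [hw ->]].
  case: (Rle_dec (Qf w) (Msup - eps)) => // h.
  exfalso; apply: hn1; exists w; split => //; lra.
lra.
Qed.


Definition Pm : mat n := fun i j => (if i == j then Msup else 0) - mmul W W i j + / INR n.

Lemma mvPm w : mv Pm w = (fun i => Msup * w i - mv W (mv W w) i + gsum w / INR n).
Proof.
apply: functional_extensionality => i.
rewrite -mv_mmul /mv /Pm.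
have -> : \big[Rplus/0]_(j < n) (((if i == j then Msup else 0) - mmul W W i j + / INR n) * w j)
  = gsum (fun j : 'I_n => (if i == j then Msup else 0) * w j) - gsum (fun j => mmul W W i j * w j)
    + / INR n * gsum w.
  rewrite -gsum_scal -gsum_sub -gsum_add; apply: gsum_ext => j; ring.
rewrite /gsum (bigD1 i) //= eqxx big1; last by move=> j /negPf; rewrite eq_sym => ->; ring.
rewrite /Rdiv; ring.
Qed.

Lemma Pm_sym i j : Pm i j = Pm j i.
Proof.
rewrite /Pm /mmul eq_sym.
congr (_ - _ + _); apply: eq_bigr => k _; rewrite (HWsym i k) (HWsym k j); ring.
Qed.

Lemma Pdot w : gdot (mv Pm w) w = Msup * gdot w w - Qf w.
Proof.
rewrite mvPm /Qf.
have e1 : gdot (fun i => Msup * w i - mv W (mv W w) i + gsum w / INR n) w =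
   Msup * gdot w w - gdot (mv W (mv W w)) w + gsum w / INR n * gsum w.
  rewrite /gdot -!gsum_scal -gsum_sub -gsum_add; apply: gsum_ext => k; ring.
rewrite e1 (sym_mv (mv W w) w HWsym) /Rdiv; ring.
Qed.

Lemma P_psd w : 0 <= gdot (mv Pm w) w.
Proof. rewrite Pdot; have := prop1 w; lra. Qed.



Lemma P_upper w : gdot (mv Pm w) w <= (Rabs Msup + 1) * gdot w w.
Proof.
rewrite Pdot; have := Qf_ge w; have := gdot_ge0 w; have := Rle_abs Msup.
move: (gdot w w) (Qf w) (Rabs Msup) => a b c; intros; nra.
Qed.

Lemma P_cs w : gdot (mv Pm w) (mv Pm w) <= (Rabs Msup + 1) * gdot (mv Pm w) w.
Proof.
set c := Rabs Msup + 1.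
have hc : 0 < c by have := Rabs_pos Msup; rewrite /c; lra.
set z := mv Pm w.
set w2 := fun i => 1 * w i + (- / c) * z i.
have h0 := P_psd w2.
have e : mv Pm w2 = (fun i => 1 * mv Pm w i + (- / c) * mv Pm z i) by exact: mv_lin.
rewrite e /w2 gdot_lin2 in h0.
have hsym : gdot (mv Pm z) w = gdot z z.
  by rewrite (sym_mv z w Pm_sym).
rewrite hsym -/z in h0.
have hu := P_upper z.
rewrite -/c in hu.
have hz := gdot_ge0 z.
move: h0 hu hz; move: (gdot z z) (gdot (mv Pm z) z) (gdot z w) => q r0 r1 h0 hu hz.
have hic : 0 < / c by apply Rinv_0_lt_compat.
have e2 : - / c * - / c * r0 <= - / c * - / c * (c * q).
  apply Rmult_le_compat_l; [nra| exact hu].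
have e3 : - / c * - / c * (c * q) = / c * q by field; lra.
have h4 : 0 <= r1 - / c * q.
  have : 1 * 1 * r1 + 1 * - / c * q + - / c * 1 * q + - / c * - / c * r0 <= r1 - / c * q by lra.
  lra.
have := Rmult_le_compat_l c _ _ (Rlt_le _ _ hc) h4.
have -> : c * (r1 - / c * q) = c * r1 - q by field; lra.
lra.
Qed.

Lemma Msup_le : Msup <= beta ^ 2.
Proof.
apply: NNPP => hM.
have hM' : beta ^ 2 < Msup by apply Rnot_le_lt.
have hb2 : 0 <= beta ^ 2 by apply pow_le.
have hMp : 0 < Msup by lra.
have hc : 0 < Rabs Msup + 1 by have := Rabs_pos Msup; lra.
have happ : forall eps, 0 < eps -> exists w, gdot w w = 1 /\ gdot (mv Pm w) (mv Pm w) < eps.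
  move=> eps he.
  have [w [hw1 hw2]] := @prop2 (eps / (Rabs Msup + 1)) ltac:(apply Rdiv_lt_0_compat; lra).
  exists w; split => //.
  have := P_cs w; rewrite Pdot hw1.
  have : (Rabs Msup + 1) * (Msup * 1 - Qf w) < (Rabs Msup + 1) * (eps / (Rabs Msup + 1)).
    apply Rmult_lt_compat_l; lra.
  have -> : (Rabs Msup + 1) * (eps / (Rabs Msup + 1)) = eps by field; lra.
  lra.
have [v [[i hvi] hv]] := singular happ.
rewrite mvPm in hv.
have hs : gsum v = 0.
  have hsum : gsum (fun i => Msup * v i - mv W (mv W v) i + gsum v / INR n) = 0.
    rewrite /gsum big1 // => j _; exact: hv.
  rewrite gsum_add gsum_sub gsum_scal gsum_const in hsum.
  have [_ [_ hc1]] := HWds.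
  rewrite !sum_mv // in hsum.
  have : Msup * gsum v = 0.
    have e : INR n * (gsum v / INR n) = gsum v by field; lra.
    rewrite e in hsum.
    lra.
  move=> h; have := Rmult_integral _ _ h; case => //; lra.
have hWW : forall i, mv W (mv W v) i = Msup * v i.
  move=> j; have := hv j; rewrite hs; have -> : 0 / INR n = 0 by field; lra.
  lra.
set r := sqrt Msup.
have hr : r * r = Msup by apply sqrt_sqrt; lra.
have hr0 : 0 < r by apply sqrt_lt_R0.
set wv := fun i => mv W v i + r * v i.
have hwv : forall i, \big[Rplus/0]_(j < n) (W i j * wv j) = r * wv i.
  move=> j.
  have e : mv W wv = (fun i => 1 * mv W (mv W v) i + r * mv W v i).
    rewrite /wv.
    have -> : (fun i => mv W v i + r * v i) = (fun i => 1 * mv W v i + r * v i).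
      by apply: functional_extensionality => k; ring.
    exact: mv_lin.
  change (mv W wv j = r * wv j); rewrite e hWW /wv -hr; ring.
have hrb : r <= beta.
  case: (classic (exists i, wv i <> 0)) => hex.
    have hne : r <> 1.
      move=> hr1.
      have [c hcst] := HW1s (v := wv) ltac:(move=> j; rewrite hwv hr1; ring).
      have hsw : gsum wv = 0.
        rewrite /wv gsum_add gsum_scal.
        have [_ [_ hc1]] := HWds.
        rewrite sum_mv // hs; ring.
      have : gsum wv = INR n * c by rewrite (gsum_ext hcst) gsum_const.
      rewrite hsw => h0.
      have hc0 : c = 0 by have := Rmult_integral _ _ (esym h0); case => //; lra.
      case: hex => j hj; apply: hj; rewrite hcst hc0 //.
    have := Hb (ex_intro _ wv (conj hex hwv)) hne.
    rewrite Rabs_pos_eq; lra.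
  have hw0 : forall i, wv i = 0.
    move=> j; apply: NNPP => hj; apply: hex; exists j; exact: hj.
  have hev : forall i, \big[Rplus/0]_(j < n) (W i j * v j) = (- r) * v i.
    move=> j; have := hw0 j; rewrite /wv /mv; lra.
  have hne : - r <> 1 by lra.
  have := Hb (ex_intro _ v (conj (ex_intro _ i hvi) hev)) hne.
  rewrite Rabs_Ropp Rabs_pos_eq; lra.
have : r * r <= beta * beta by apply Rmult_le_compat; lra.
rewrite hr; simpl; lra.
Qed.

Lemma spectral w : gsum w = 0 -> gdot (mv W w) (mv W w) <= beta ^ 2 * gdot w w.
Proof.
move=> hs.
have := prop1 w; rewrite /Qf hs.
have -> : 0 * 0 / INR n = 0 by field; lra.
have := Msup_le; have := gdot_ge0 w.
move: (gdot w w) (gdot (mv W w) (mv W w)) Msup (beta ^ 2) => a b c d; intros; nra.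
Qed.

End Spec.


Lemma norm_triangle p (u v : vec p) : norm (vadd u v) <= norm u + norm v.
Proof. exact: gnrm_triangle. Qed.

Lemma norm_triangle_sub p (u v w : vec p) : norm (vsub u w) <= norm (vsub u v) + norm (vsub v w).
Proof.
have -> : vsub u w = vadd (vsub u v) (vsub v w).
  apply: functional_extensionality => l; rewrite /vadd /vsub; ring.
exact: norm_triangle.
Qed.

Definition vz p : vec p := fun _ => 0.

Lemma norm_vsum p n (a : 'I_n -> vec p) :
  norm (fun l => \big[Rplus/0]_(i < n) a i l) <= \big[Rplus/0]_(i < n) norm (a i).
Proof.
have -> : (fun l => \big[Rplus/0]_(i < n) a i l) = \big[@vadd p/@vz p]_(i < n) a i.
  apply: functional_extensionality => l.
  rewrite (big_morph (fun v : vec p => v l) (id1 := 0) (op1 := Rplus)) //.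
elim/big_ind2: _ => [|x1 x2 y1 y2 h1 h2|j _].
- have -> : norm (@vz p) = 0.
    rewrite /norm.
    have -> : dot (@vz p) (@vz p) = 0.
      rewrite dot_gdot /gdot (gsum_ext (G := fun k => 0 * 0)); last by move=> k; rewrite /vz.
      rewrite gsum_scal; ring.
    exact: sqrt_0.
  lra.
- have := norm_triangle x2 y2; lra.
- lra.
Qed.

Lemma foldr_max_ge (x0 : R) xs y : y \in x0 :: xs -> y <= foldr Rmax x0 xs.
Proof.
elim: xs y => [|x xs IH] y /=.
  by rewrite inE => /eqP ->; lra.
rewrite !inE => /orP [/eqP ->|/orP [/eqP ->|h]].
- have := IH x0; rewrite inE eqxx /= => h; have := h isT; have := Rmax_r x (foldr Rmax x0 xs); lra.
- apply Rmax_l.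
- have := IH y; rewrite inE h orbT => h2; have := h2 isT; have := Rmax_r x (foldr Rmax x0 xs); lra.
Qed.

Lemma foldr_min_le (x0 : R) xs y : y \in x0 :: xs -> foldr Rmin x0 xs <= y.
Proof.
elim: xs y => [|x xs IH] y /=.
  by rewrite inE => /eqP ->; lra.
rewrite !inE => /orP [/eqP ->|/orP [/eqP ->|h]].
- have := IH x0; rewrite inE eqxx /= => h; have := h isT; have := Rmin_r x (foldr Rmin x0 xs); lra.
- apply Rmin_l.
- have := IH y; rewrite inE h orbT => h2; have := h2 isT; have := Rmin_r x (foldr Rmin x0 xs); lra.
Qed.

Lemma foldr_min_pos (x0 : R) xs : 0 < x0 -> (forall y, y \in xs -> 0 < y) -> 0 < foldr Rmin x0 xs.
Proof.
move=> h0; elim: xs => [|x xs IH] //= H.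
apply Rmin_glb_lt.
- apply H; rewrite inE eqxx //.
- apply IH => y hy; apply H; rewrite inE hy orbT //.
Qed.

Lemma maxI_ge n (F : 'I_n -> R) i : F i <= maxI F.
Proof.
rewrite /maxI.
have : F i \in [seq F j | j <- enum 'I_n] by apply: map_f; rewrite mem_enum.
case: [seq F j | j <- enum 'I_n] => [//|a s h].
exact: foldr_max_ge.
Qed.

Lemma minI_le n (F : 'I_n -> R) i : minI F <= F i.
Proof.
rewrite /minI.
have : F i \in [seq F j | j <- enum 'I_n] by apply: map_f; rewrite mem_enum.
case: [seq F j | j <- enum 'I_n] => [//|a s h].
exact: foldr_min_le.
Qed.

Lemma minI_pos n (F : 'I_n -> R) : (0 < n)%nat -> (forall i, 0 < F i) -> 0 < minI F.
Proof.
move=> hn H; rewrite /minI.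
have hall : forall y, y \in [seq F j | j <- enum 'I_n] -> 0 < y.
  by move=> y /mapP [j _ ->].
have hne : [seq F j | j <- enum 'I_n] <> [::].
  move=> h; have := size_map F (enum 'I_n); rewrite h size_enum_ord /=; move=> e.
  by move: hn; rewrite -e.
move: hall hne; case: [seq F j | j <- enum 'I_n] => [//|a s] hall _.
apply: foldr_min_pos.
- apply hall; rewrite inE eqxx //.
- move=> y hy; apply hall; rewrite inE hy orbT //.
Qed.

Section Stack.
Variables (n p : nat).
Implicit Types (z a b : 'I_n -> vec p).

Definition col z (l : 'I_p) : 'I_n -> R := fun i => z i l.
Definition ssq z := gsum (fun i => dot (z i) (z i)).
Definition zbar z : vec p := fun l => gsum (col z l) / INR n.
Definition dev z : 'I_n -> vec p := fun i l => z i l - zbar z l.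
Definition Zs (Z : mat n) z : 'I_n -> vec p := fun i l => mv Z (col z l) i.
Definition flat z : ('I_n * 'I_p)%type -> R := fun kl => z kl.1 kl.2.

Lemma ssq_col z : ssq z = gsum (fun l : 'I_p => gdot (col z l) (col z l)).
Proof. rewrite /ssq /gsum /dot /gdot /gsum exchange_big //. Qed.

Lemma ssq_flat z : ssq z = gdot (flat z) (flat z).
Proof. rewrite /ssq /gdot /gsum /dot /gdot /gsum pair_bigA //. Qed.

Lemma snorm_flat z : snorm z = gnrm (flat z).
Proof. rewrite /snorm /gnrm -ssq_flat //. Qed.

Lemma ssq_ge0 z : 0 <= ssq z.
Proof. apply: gsum_ge0 => i; apply dot_ge0. Qed.

Lemma snorm_ge0 z : 0 <= snorm z.
Proof. apply sqrt_pos. Qed.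

Lemma snorm_add a b : snorm (fun i => vadd (a i) (b i)) <= snorm a + snorm b.
Proof. rewrite !snorm_flat; exact: gnrm_triangle. Qed.

Lemma snorm_sub a b : snorm (fun i => vsub (a i) (b i)) <= snorm a + snorm b.
Proof. rewrite !snorm_flat; exact: gnrm_triangle_sub. Qed.

Lemma norm_le_snorm z i : norm (z i) <= snorm z.
Proof.
apply sqrt_le_1_alt.
exact: (gsum_term (F := fun i => dot (z i) (z i)) i (fun k => dot_ge0 (z k))).
Qed.

Lemma snorm_le z1 z2 : ssq z1 <= ssq z2 -> snorm z1 <= snorm z2.
Proof. move=> h; apply sqrt_le_1_alt, h. Qed.

Lemma ssq_Zs Z z : doubly_stochastic Z -> ssq (Zs Z z) <= ssq z.
Proof.
move=> hZ; rewrite !ssq_col; apply: gsum_le => l.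
exact: jensen.
Qed.

Lemma zbar_Zs Z z : doubly_stochastic Z -> zbar (Zs Z z) = zbar z.
Proof.
move=> [_ [_ hc]]; apply: functional_extensionality => l.
rewrite /zbar.
have -> : col (Zs Z z) l = mv Z (col z l) by [].
rewrite sum_mv //.
Qed.

Lemma col_dev_Zs Z z l : doubly_stochastic Z -> col (dev (Zs Z z)) l = mv Z (col (dev z) l).
Proof.
move=> hZ; rewrite /dev zbar_Zs //.
have [_ [hr _]] := hZ.
have -> : col (fun i l0 => z i l0 - zbar z l0) l = (fun i => 1 * col z l i + (- zbar z l) * 1).
  apply: functional_extensionality => i; rewrite /col; ring.
rewrite mv_lin mv_const //.
apply: functional_extensionality => i; rewrite /col /Zs /col; ring.
Qed.

Lemma gsum_col_dev z l : (0 < n)%nat -> gsum (col (dev z) l) = 0.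
Proof.
move=> hn.
have hnR : 0 < INR n by apply lt_0_INR; apply/ltP.
rewrite /dev /col gsum_sub gsum_const /zbar /col.
have e : forall s, s - INR n * (s / INR n) = 0 by move=> s; field; lra.
apply: e.
Qed.

Lemma ssq_dev_le z : (0 < n)%nat -> ssq (dev z) <= ssq z.
Proof.
move=> hn.
have hnR : 0 < INR n by apply lt_0_INR; apply/ltP.
rewrite !ssq_col; apply: gsum_le => l.
have e : gdot (col (dev z) l) (col (dev z) l) =
   gdot (col z l) (col z l) - gsum (col z l) * gsum (col z l) / INR n.
  rewrite /dev /col /gdot /zbar /col.
  have -> : gsum (fun k => (z k l - gsum (fun i => z i l) / INR n) * (z k l - gsum (fun i => z i l) / INR n))
    = gsum (fun k => z k l * z k l) - 2 * (gsum (fun i => z i l) / INR n) * gsum (fun k => z k l)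
      + gsum (fun _ : 'I_n => (gsum (fun i => z i l) / INR n) * (gsum (fun i => z i l) / INR n)).
    rewrite -gsum_scal -gsum_sub -gsum_add; apply: gsum_ext => k; ring.
  rewrite gsum_const.
  have e2 : forall q s : R, q - 2 * (s / INR n) * s + INR n * (s / INR n * (s / INR n)) = q - s * s / INR n.
    move=> q s; field; lra.
  apply: e2.
rewrite e.
have : 0 <= gsum (col z l) * gsum (col z l) / INR n.
  apply Rmult_le_pos; [exact: Rle_0_sqr| left; apply Rinv_0_lt_compat; lra].
lra.
Qed.

End Stack.

Lemma spectral_mpow n (W : mat n) beta t (w : 'I_n -> R) :
  sym_mat W -> doubly_stochastic W -> simple_eig1 W ->
  (forall lam, is_eigenvalue W lam -> lam <> 1 -> Rabs lam <= beta) -> 0 <= beta -> (0 < n)%nat ->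
  gsum w = 0 -> gdot (mv (mpow W t) w) (mv (mpow W t) w) <= (beta ^ 2) ^ t * gdot w w.
Proof.
move=> hs hds h1 hb hb0 hn hw.
elim: t => [|t IH] /=.
  rewrite mv_mid; lra.
rewrite mv_mmul.
have hsum : gsum (mv (mpow W t) w) = 0.
  rewrite sum_mv //; exact: colsum_mpow.
have h2 := spectral hs hds h1 hb hb0 hn hsum.
have hb2 : 0 <= beta ^ 2 by apply pow_le.
have h3 := Rmult_le_compat_l _ _ _ hb2 IH.
change ((beta ^ 2) ^ t.+1) with (beta ^ 2 * (beta ^ 2) ^ t).
rewrite -Rmult_assoc in h3.
exact: Rle_trans h2 h3.
Qed.

Lemma ssq_dev_Zs_mpow n p (W : mat n) beta t (z : 'I_n -> vec p) :
  sym_mat W -> doubly_stochastic W -> simple_eig1 W ->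
  (forall lam, is_eigenvalue W lam -> lam <> 1 -> Rabs lam <= beta) -> 0 <= beta -> (0 < n)%nat ->
  ssq (dev (Zs (mpow W t) z)) <= (beta ^ 2) ^ t * ssq (dev z).
Proof.
move=> hs hds h1 hb hb0 hn.
rewrite !ssq_col -gsum_scal; apply: gsum_le => l.
rewrite col_dev_Zs; last exact: ds_mpow.
apply: spectral_mpow => //.
exact: gsum_col_dev.
Qed.


Lemma contract' p (F : vec p -> R) G mu L alpha :
  FOp F G mu -> DLp F G L -> 0 < mu -> 0 < L -> 0 < alpha -> alpha <= 1 / L ->
  forall x y,
  dot (vsub (vsub x (vscale alpha (G x))) (vsub y (vscale alpha (G y))))
      (vsub (vsub x (vscale alpha (G x))) (vsub y (vscale alpha (G y))))
  <= (1 - 2 * alpha * mu * L / (mu + L)) * dot (vsub x y) (vsub x y).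
Proof.
move=> hFO hDL hmu hL ha hal x y.
case: (Rle_dec mu L) => hml.
  apply: contract => //.
  apply: (Rle_trans _ _ _ hal).
  apply (Rmult_le_reg_r (L * (mu + L))); first nra.
  have -> : 1 / L * (L * (mu + L)) = mu + L by field; lra.
  have -> : 2 / (mu + L) * (L * (mu + L)) = 2 * L by field; lra.
  lra.
have hz : forall v : vec p, dot v v = 0.
  move=> v; have := hFO y (vadd y v); have := hDL y (vadd y v).
  have -> : vsub (vadd y v) y = v by apply: functional_extensionality => l; rewrite /vsub /vadd; ring.
  have := dot_ge0 v; move: (dot v v) => N; intros; nra.
rewrite !hz; lra.
Qed.

Lemma young p (a e : vec p) alpha delta : 0 < alpha -> 0 < delta ->
  dot (vsub a (vscale alpha e)) (vsub a (vscale alpha e)) <=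
  (1 + alpha * delta) * dot a a + alpha * (alpha + / delta) * dot e e.
Proof.
move=> ha hd.
have E : vsub a (vscale alpha e) = (fun l => 1 * a l + (- alpha) * e l + 0 * e l).
  apply: functional_extensionality => l; rewrite /vsub /vscale; ring.
rewrite E dot_lin3.
have h := dot_ge0 (fun l => sqrt delta * a l + (/ sqrt delta) * e l + 0 * e l).
rewrite dot_lin3 in h.
have hs : sqrt delta * sqrt delta = delta by apply sqrt_sqrt; lra.
have hsp : 0 < sqrt delta by apply sqrt_lt_R0.
have hi : / sqrt delta * / sqrt delta = / delta by rewrite -Rinv_mult hs.
move: h; move: (dot a a) (dot a e) (dot e e) => aa ae ee h.
move: h hi; move: (sqrt delta) hs hsp => s hs' hsp' h hi.
have e1 : s * s * aa + (s * / s + / s * s) * ae +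
  (s * 0 + 0 * s) * ae + / s * / s * ee +
  (/ s * 0 + 0 * / s) * ee + 0 * 0 * ee = delta * aa + 2 * ae + / delta * ee.
  rewrite -hs'; field; lra.
rewrite e1 in h.
have : 0 <= alpha * (delta * aa + 2 * ae + / delta * ee) by apply Rmult_le_pos; lra.
move=> h2.
have e2 : 1 * 1 * aa + (1 * - alpha + - alpha * 1) * ae + (1 * 0 + 0 * 1) * ae + - alpha * - alpha * ee +
   (- alpha * 0 + 0 * - alpha) * ee + 0 * 0 * ee = aa - 2 * alpha * ae + alpha * alpha * ee by ring.
rewrite e2.
have e3 : alpha * (delta * aa + 2 * ae + / delta * ee) = alpha * delta * aa + 2 * alpha * ae + alpha * / delta * ee by ring.
rewrite e3 in h2.
lra.
Qed.

Section Avg.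
Variables (n p : nat) (f : 'I_n -> vec p -> R) (g : 'I_n -> vec p -> vec p) (c : 'I_n -> R).
Hypothesis hn : (0 < n)%nat.

Definition Fbar (z : vec p) := sumI (fun i => f i z) / INR n.
Definition Gbar (z : vec p) : vec p := fun l => gsum (fun i => g i z l) / INR n.

Lemma dot_Gbar x d : dot (Gbar x) d = gsum (fun i => dot (g i x) d) / INR n.
Proof.
rewrite /Gbar dot_gdot /gdot /dot /gdot /gsum /Rdiv.
transitivity (\big[Rplus/0]_(l < p) \big[Rplus/0]_(i < n) (g i x l * d l * / INR n)).
  apply: eq_bigr => l _; rewrite !big_distrl /=; apply: eq_bigr => i _; ring.
rewrite exchange_big big_distrl /=; apply: eq_bigr => i _; rewrite big_distrl /=.
apply: eq_bigr => l _; ring.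
Qed.

Lemma FO_avg : (forall i, FOp (f i) (g i) (c i)) -> FOp Fbar Gbar (sumI c / INR n).
Proof.
move=> H x z.
have hnR : 0 < INR n by apply lt_0_INR; apply/ltP.
have hs : gsum (fun i => f i x + dot (g i x) (vsub z x) + c i / 2 * dot (vsub z x) (vsub z x))
   <= gsum (fun i => f i z) by apply: gsum_le => i; apply H.
rewrite !gsum_add in hs.
have e : gsum (fun i => c i / 2 * dot (vsub z x) (vsub z x)) = gsum c / 2 * dot (vsub z x) (vsub z x).
  rewrite /Rdiv (gsum_ext (G := fun i => (/ 2 * dot (vsub z x) (vsub z x)) * c i)); last by move=> i; ring.
  rewrite gsum_scal; ring.
rewrite e in hs.
rewrite dot_Gbar /Fbar.
change (sumI (fun i => f i x)) with (gsum (fun i => f i x)).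
change (sumI (fun i => f i z)) with (gsum (fun i => f i z)).
change (sumI c) with (gsum c).
apply (Rmult_le_reg_r (INR n)) => //.
have e2 : (gsum (fun i => f i x) / INR n + gsum (fun i => dot (g i x) (vsub z x)) / INR n +
   gsum c / INR n / 2 * dot (vsub z x) (vsub z x)) * INR n =
   gsum (fun i => f i x) + gsum (fun i => dot (g i x) (vsub z x)) + gsum c / 2 * dot (vsub z x) (vsub z x).
  field; lra.
have e3 : gsum (fun i => f i z) / INR n * INR n = gsum (fun i => f i z) by field; lra.
rewrite e2 e3; lra.
Qed.

Lemma DL_avg : (forall i, DLp (f i) (g i) (c i)) -> DLp Fbar Gbar (sumI c / INR n).
Proof.
move=> H x z.
have hnR : 0 < INR n by apply lt_0_INR; apply/ltP.
have hs : gsum (fun i => f i z) <=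
   gsum (fun i => f i x + dot (g i x) (vsub z x) + c i / 2 * dot (vsub z x) (vsub z x))
   by apply: gsum_le => i; apply H.
rewrite !gsum_add in hs.
have e : gsum (fun i => c i / 2 * dot (vsub z x) (vsub z x)) = gsum c / 2 * dot (vsub z x) (vsub z x).
  rewrite /Rdiv (gsum_ext (G := fun i => (/ 2 * dot (vsub z x) (vsub z x)) * c i)); last by move=> i; ring.
  rewrite gsum_scal; ring.
rewrite e in hs.
rewrite dot_Gbar /Fbar.
change (sumI (fun i => f i x)) with (gsum (fun i => f i x)).
change (sumI (fun i => f i z)) with (gsum (fun i => f i z)).
change (sumI c) with (gsum c).
apply (Rmult_le_reg_r (INR n)) => //.
have e2 : (gsum (fun i => f i x) / INR n + gsum (fun i => dot (g i x) (vsub z x)) / INR n +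
   gsum c / INR n / 2 * dot (vsub z x) (vsub z x)) * INR n =
   gsum (fun i => f i x) + gsum (fun i => dot (g i x) (vsub z x)) + gsum c / 2 * dot (vsub z x) (vsub z x).
  field; lra.
have e3 : gsum (fun i => f i z) / INR n * INR n = gsum (fun i => f i z) by field; lra.
rewrite e2 e3; lra.
Qed.

End Avg.


Unset Implicit Arguments.
Set Strict Implicit.

Theorem corollary2
  (n p t : nat) (W : mat n) (beta : R)
  (f : 'I_n -> vec p -> R) (g : 'I_n -> vec p -> vec p)
  (mu Lf : 'I_n -> R) (alpha : R) (s0 xstar : vec p) (ustar : 'I_n -> vec p)
  (x y : nat -> 'I_n -> vec p)
  (* network *)
  (HWsym : sym_mat W) (HWds : doubly_stochastic W)
  (HWdiag : forall i, 0 < W i i) (HWconn : connected_net W)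
  (HW1 : is_eigenvalue W 1) (HW1s : simple_eig1 W)
  (HWeig : forall lam, is_eigenvalue W lam -> lam <> 1 -> -1 < lam < 1)
  (Hbeta : second_eig_mag W beta) (Hbeta01 : 0 < beta < 1)
  (Ht : (1 <= t)%nat)
  (* local functions *)
  (Hmu : forall i, 0 < mu i) (HL : forall i, 0 < Lf i)
  (Hgrad : forall i, is_gradient (f i) (g i))
  (Hsc : forall i, strongly_convex (mu i) (f i))
  (Hlip : forall i, lipschitz (Lf i) (g i))
  (Hxstar : is_minimizer (fun z => sumI (fun i => f i z)) xstar)
  (Hustar : forall i, is_minimizer (f i) (ustar i))
  (* NEAR-DGD^t from the common initial point s0 *)
  (Hy0 : forall i, y 0%nat i = s0)
  (Hx0 : forall i, x 0%nat i = s0)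
  (Hx : forall k i l, x k i l = \big[Rplus/0]_(j < n) (mpow W t i j * y k j l))
  (Hy : forall k i, y (S k) i = vsub (x k i) (vscale alpha (g i (x k i)))) :
  let L := maxI Lf in
  let mubar := sumI mu / INR n in
  let Lbar := sumI Lf / INR n in
  let c2 := 2 * mubar * Lbar / (mubar + Lbar) in
  let c4 := 2 / (mubar + Lbar) in
  let nu := 2 * alpha * minI (fun i => mu i * Lf i / (mu i + Lf i)) in
  let D := snorm (fun i => vsub s0 (ustar i)) + (nu + 4) / nu * snorm ustar in
  0 < alpha -> alpha <= Rmin (1 / L) c4 -> alpha * c2 < 1 ->
  let delta := c2 / (2 * (1 - alpha * c2)) in
  let c1 := sqrt (1 - alpha * c2 / 2) in
  let c3 := sqrt (alpha * (alpha + / delta)) * D * L in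
  forall (k : nat) (i : 'I_n),
    norm (vsub (x k i) xstar)
      <= c1 ^ k * norm (vsub s0 xstar) + c3 / sqrt (1 - c1 ^ 2) * beta ^ t
         + beta ^ t * D /\
    norm (vsub (y k i) xstar)
      <= c1 ^ k * norm (vsub s0 xstar) + c3 / sqrt (1 - c1 ^ 2) * beta ^ t
         + beta ^ t * D + 2 * D.

Proof.
intros L mubar Lbar c2 c4 nu D Ha Hamin Hac2 delta c1 c3 k i.
have hn : (0 < n)%nat := leq_ltn_trans (leq0n i) (ltn_ord i).
have hnR : 0 < INR n by apply lt_0_INR; apply/ltP.
have hLi : forall j, Lf j <= L := fun j => maxI_ge Lf j.
have hL : 0 < L := Rlt_le_trans _ _ _ (HL i) (hLi i).
have ha1 : alpha <= 1 / L := Rle_trans _ _ _ Hamin (Rmin_l _ _).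
have ha4 : alpha <= c4 := Rle_trans _ _ _ Hamin (Rmin_r _ _).
have haL : alpha * L <= 1.
  have := Rmult_le_compat_r L _ _ (Rlt_le _ _ hL) ha1.
  have -> : 1 / L * L = 1 by field; lra.
  done.
have hsmu : 0 < sumI mu.
  exact: Rlt_le_trans _ _ _ (Hmu i) (gsum_term (F := mu) i (fun j => Rlt_le _ _ (Hmu j))).
have hsL : 0 < sumI Lf.
  exact: Rlt_le_trans _ _ _ (HL i) (gsum_term (F := Lf) i (fun j => Rlt_le _ _ (HL j))).
have hmubar : 0 < mubar by apply Rdiv_lt_0_compat.
have hLbar : 0 < Lbar by apply Rdiv_lt_0_compat.
have hc2 : 0 < c2.
  rewrite /c2; apply Rdiv_lt_0_compat; [apply Rmult_lt_0_compat; [apply Rmult_lt_0_compat|]|]; lra.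
have hFO : forall j, FOp (f j) (g j) (mu j) := fun j => FO_of (Rlt_le _ _ (Hmu j)) (Hgrad j) (Hsc j).
have hDL : forall j, DLp (f j) (g j) (Lf j) := fun j => DL_of (Hgrad j) (Hlip j).
have hg0 : forall j l, g j (ustar j) l = 0 := fun j => grad0 (HL j) (hDL j) (Hustar j).
have Hb : forall lam, is_eigenvalue W lam -> lam <> 1 -> Rabs lam <= beta := proj2 Hbeta.
have hb0 : 0 <= beta by lra.
have hbt : 0 <= beta ^ t by apply pow_le.
set m := minI (fun j => mu j * Lf j / (mu j + Lf j)).
have hm : 0 < m.
  apply: minI_pos => // j; have := Hmu j; have := HL j => *.
  apply Rdiv_lt_0_compat; [apply Rmult_lt_0_compat|]; lra.
have hnum : nu = 2 * alpha * m by [].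
have hnu : 0 < nu by rewrite hnum; apply Rmult_lt_0_compat; lra.
have hmi : forall j, m <= mu j * Lf j / (mu j + Lf j) := fun j => minI_le _ j.
have hnu2 : nu < 2.
  have h1 : mu i * Lf i / (mu i + Lf i) < Lf i.
    have := Hmu i; have := HL i => *.
    apply (Rmult_lt_reg_r (mu i + Lf i)); first lra.
    have -> : mu i * Lf i / (mu i + Lf i) * (mu i + Lf i) = mu i * Lf i by field; lra.
    nra.
  have := hmi i; have := hLi i; rewrite hnum; nra.
set Z := mpow W t.
have hZ : doubly_stochastic Z := ds_mpow t HWds.
have hxZ : forall k, x k = Zs Z (y k).
  move=> k'; apply: functional_extensionality => j; apply: functional_extensionality => l.
  by rewrite Hx.
set U := snorm ustar.
have hU : 0 <= U by apply snorm_ge0.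
set e := fun k => snorm (fun j => vsub (y k j) (ustar j)).
have he_ge0 : forall k, 0 <= e k by move=> k'; apply snorm_ge0.
have hstep : forall k, e k.+1 <= (1 - nu / 2) * (e k + 2 * U).
  move=> k'.
  have h1 : ssq (fun j => vsub (y k'.+1 j) (ustar j)) <= (1 - nu) * ssq (fun j => vsub (x k' j) (ustar j)).
    rewrite /ssq -gsum_scal; apply: gsum_le => j.
    have ha1j : alpha <= 1 / Lf j.
      apply: (Rle_trans _ _ _ ha1); apply Rmult_le_compat_l; first lra.
      apply Rinv_le_contravar; [exact: HL| exact: hLi].
    have hc := contract' (hFO j) (hDL j) (Hmu j) (HL j) Ha ha1j (x k' j) (ustar j).
    have euj : vsub (ustar j) (vscale alpha (g j (ustar j))) = ustar j.
      apply: functional_extensionality => l; rewrite /vsub /vscale hg0; ring.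
    rewrite euj -Hy in hc.
    apply: (Rle_trans _ _ _ hc); apply Rmult_le_compat_r; first exact: dot_ge0.
    have : nu <= 2 * alpha * mu j * Lf j / (mu j + Lf j).
      have -> : 2 * alpha * mu j * Lf j / (mu j + Lf j) = 2 * alpha * (mu j * Lf j / (mu j + Lf j)).
        by field; have := Hmu j; have := HL j; lra.
      rewrite hnum; apply Rmult_le_compat_l; [lra| exact: hmi].
    lra.
  have h2 : snorm (fun j => vsub (x k' j) (ustar j)) <= e k' + 2 * U.
    have hsplit : (fun j => vsub (x k' j) (ustar j)) =
       (fun j => vadd (Zs Z (fun j0 => vsub (y k' j0) (ustar j0)) j) (vsub (Zs Z ustar j) (ustar j))).
      apply: functional_extensionality => j; apply: functional_extensionality => l.
      rewrite hxZ /Zs /vadd /vsub /col /mv.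
      have -> : \big[Rplus/0]_(j0 < n) (Z j j0 * (y k' j0 l - ustar j0 l)) =
        \big[Rplus/0]_(j0 < n) (Z j j0 * y k' j0 l) - \big[Rplus/0]_(j0 < n) (Z j j0 * ustar j0 l).
        rewrite -/(gsum _) -/(gsum _) -/(gsum _) -gsum_sub; apply: gsum_ext => j0; ring.
      ring.
    rewrite hsplit; apply: (Rle_trans _ _ _ (snorm_add _ _)).
    have h3 : snorm (Zs Z (fun j0 => vsub (y k' j0) (ustar j0))) <= e k'.
      by apply: snorm_le; apply: ssq_Zs.
    have h4 : snorm (fun j => vsub (Zs Z ustar j) (ustar j)) <= U + U.
      apply: (Rle_trans _ _ _ (snorm_sub _ _)).
      have : snorm (Zs Z ustar) <= U by apply: snorm_le; apply: ssq_Zs.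
      rewrite -/U; lra.
    lra.
  have hq : 0 <= 1 - nu / 2 by lra.
  have h5 : ssq (fun j => vsub (y k'.+1 j) (ustar j)) <=
     ((1 - nu / 2) * (1 - nu / 2)) * ssq (fun j => vsub (x k' j) (ustar j)).
    apply: (Rle_trans _ _ _ h1); apply Rmult_le_compat_r; first exact: ssq_ge0.
    nra.
  have h6 : e k'.+1 <= (1 - nu / 2) * snorm (fun j => vsub (x k' j) (ustar j)).
    rewrite /e /snorm -/(ssq _) -/(ssq _).
    apply: (Rle_trans _ _ _ (sqrt_le_1_alt _ _ h5)).
    rewrite sqrt_mult; [|nra| exact: ssq_ge0].
    rewrite sqrt_square //; exact: Rle_refl.
  apply: (Rle_trans _ _ _ h6); apply Rmult_le_compat_l => //.
have hbound : forall k, e k <= e 0%nat + 4 / nu * U.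
  elim => [|k' IH].
    have : 0 <= 4 / nu * U by apply Rmult_le_pos; [left; apply Rdiv_lt_0_compat|]; lra.
    lra.
  apply: (Rle_trans _ _ _ (hstep k')).
  have e1 : (1 - nu / 2) * (4 / nu * U + 2 * U) = 4 / nu * U - nu * U by field; lra.
  have hq : 0 <= 1 - nu / 2 by lra.
  have h1 := Rmult_le_compat_l _ _ _ hq (Rplus_le_compat_r (2 * U) _ _ IH).
  have := he_ge0 0%nat.
  have : 0 <= nu * U by apply Rmult_le_pos; lra.
  move: h1 e1; move: (e 0%nat) (4 / nu * U) (e k') => a b c; intros; nra.
have he0 : e 0%nat = snorm (fun j => vsub s0 (ustar j)).
  rewrite /e; f_equal; apply: functional_extensionality => j; rewrite Hy0 //.
have hD : D = e 0%nat + (nu + 4) / nu * U by rewrite he0.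
have hD0 : 0 <= D.
  rewrite hD; have := he_ge0 0%nat.
  have : 0 <= (nu + 4) / nu * U by apply Rmult_le_pos; [left; apply Rdiv_lt_0_compat|]; lra.
  lra.
have hdevy : forall k, snorm (dev (y k)) <= D.
  move=> k'.
  have hsp : dev (y k') = (fun j => vadd (dev (fun j0 => vsub (y k' j0) (ustar j0)) j) (dev ustar j)).
    apply: functional_extensionality => j; apply: functional_extensionality => l.
    rewrite /dev /vadd /vsub /zbar /col.
    have -> : gsum (fun i0 => y k' i0 l - ustar i0 l) = gsum (fun i0 => y k' i0 l) - gsum (fun i0 => ustar i0 l).
      exact: gsum_sub.
    have key : forall a b c d0 : R, a - b / INR n = (a - c - (b - d0) / INR n) + (c - d0 / INR n).
      intros; field; lra.
    apply: key.
  rewrite hsp; apply: (Rle_trans _ _ _ (snorm_add _ _)).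
  have h1 : snorm (dev (fun j0 => vsub (y k' j0) (ustar j0))) <= e k' by apply: snorm_le; apply: ssq_dev_le.
  have h2 : snorm (dev ustar) <= U by apply: snorm_le; apply: ssq_dev_le.
  have := hbound k'; rewrite hD.
  have e1 : (nu + 4) / nu * U = 4 / nu * U + U by field; lra.
  rewrite e1; lra.
have hdevx : forall k, snorm (dev (x k)) <= beta ^ t * D.
  move=> k'.
  have h1 := ssq_dev_Zs_mpow t (y k') HWsym HWds HW1s Hb hb0 hn.
  rewrite -/Z -hxZ in h1.
  have h2 : snorm (dev (x k')) <= sqrt ((beta ^ 2) ^ t * ssq (dev (y k'))) by apply sqrt_le_1_alt.
  rewrite sqrt_mult in h2; [|apply pow_le; apply pow_le; lra| exact: ssq_ge0].
  have e1 : sqrt ((beta ^ 2) ^ t) = beta ^ t.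
    rewrite -pow_mult Nat.mul_comm pow_mult; apply sqrt_pow2; exact: hbt.
  rewrite e1 in h2.
  apply: (Rle_trans _ _ _ h2); apply Rmult_le_compat_l => //; exact: hdevy.
have hFOb : FOp (Fbar f) (Gbar g) mubar := FO_avg hn hFO.
have hDLb : DLp (Fbar f) (Gbar g) Lbar := DL_avg hn hDL.
have hmin : is_minimizer (Fbar f) xstar.
  move=> z; rewrite /Fbar /Rdiv; apply Rmult_le_compat_r; [left; apply Rinv_0_lt_compat; lra| exact: Hxstar].
have hGx : forall l, Gbar g xstar l = 0 := grad0 hLbar hDLb hmin.
have hxy : forall k, zbar (x k) = zbar (y k) by move=> k'; rewrite hxZ zbar_Zs.
set T := fun z : vec p => vsub z (vscale alpha (Gbar g z)).
have hTx : T xstar = xstar.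
  apply: functional_extensionality => l; rewrite /T /vsub /vscale hGx; ring.
set err := fun k : nat => (fun l => gsum (fun j => g j (x k j) l - g j (zbar (x k)) l) / INR n) : vec p.
have hrec : forall k, vsub (zbar (x k.+1)) xstar = vsub (vsub (T (zbar (x k))) (T xstar)) (vscale alpha (err k)).
  move=> k'; apply: functional_extensionality => l.
  rewrite hxy /T /err /vsub /vscale hGx /zbar /col /Gbar.
  have -> : gsum (fun i0 => y k'.+1 i0 l) = gsum (fun i0 => x k' i0 l) - alpha * gsum (fun i0 => g i0 (x k' i0) l).
    rewrite -gsum_scal -gsum_sub; apply: gsum_ext => j; rewrite Hy /vsub /vscale //.
  rewrite gsum_sub.
  have key : forall a b c d0 : R,
     (a - alpha * b) / INR n - c = a / INR n - alpha * (d0 / INR n) - (c - alpha * 0) - alpha * ((b - d0) / INR n).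
    intros; field; lra.
  apply: key.
have herr : forall k, norm (err k) <= L * snorm (dev (x k)).
  move=> k'.
  have e1 : err k' = vscale (/ INR n) (fun l => \big[Rplus/0]_(j < n) vsub (g j (x k' j)) (g j (zbar (x k'))) l).
    apply: functional_extensionality => l; rewrite /err /vscale /Rdiv Rmult_comm //.
  rewrite e1 norm_scale Rabs_pos_eq; last by left; apply Rinv_0_lt_compat.
  have h1 := norm_vsum (fun j => vsub (g j (x k' j)) (g j (zbar (x k')))).
  have h2 : \big[Rplus/0]_(j < n) norm (vsub (g j (x k' j)) (g j (zbar (x k')))) <=
            gsum (fun _ : 'I_n => L * snorm (dev (x k'))).
    apply: (gsum_le (I := 'I_n)) => j.
    apply: (Rle_trans _ _ _ (Hlip j _ _)).
    apply Rmult_le_compat; [exact: Rlt_le _ _ (HL j)| exact: norm_ge0| exact: hLi| exact: (norm_le_snorm (dev (x k')) j)].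
  rewrite gsum_const in h2.
  have h3 := Rle_trans _ _ _ h1 h2.
  have hi : 0 <= / INR n by left; apply Rinv_0_lt_compat.
  have := Rmult_le_compat_l _ _ _ hi h3.
  have -> : / INR n * (INR n * (L * snorm (dev (x k')))) = L * snorm (dev (x k')) by field; lra.
  done.
set Ev := fun k => vsub (zbar (x k)) xstar.
have hdelta : 0 < delta.
  rewrite /delta; apply Rdiv_lt_0_compat; lra.
have hc1sq : c1 * c1 = 1 - alpha * c2 / 2.
  rewrite /c1; apply sqrt_sqrt.
  have : 0 < alpha * c2 by apply Rmult_lt_0_compat.
  lra.
set C2 := alpha * (alpha + / delta) * ((L * (beta ^ t * D)) * (L * (beta ^ t * D))).
have hC2 : 0 <= C2.
  apply Rmult_le_pos; [apply Rmult_le_pos; [lra| have hid := Rinv_0_lt_compat _ hdelta; lra]| exact: Rle_0_sqr].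
have hEs : forall k, dot (Ev k.+1) (Ev k.+1) <= c1 * c1 * dot (Ev k) (Ev k) + C2.
  move=> k'.
  rewrite /Ev hrec.
  have hy := young (vsub (T (zbar (x k'))) (T xstar)) (err k') Ha hdelta.
  apply: (Rle_trans _ _ _ hy).
  have hc : dot (vsub (T (zbar (x k'))) (T xstar)) (vsub (T (zbar (x k'))) (T xstar)) <=
      (1 - 2 * alpha * mubar * Lbar / (mubar + Lbar)) * dot (vsub (zbar (x k')) xstar) (vsub (zbar (x k')) xstar).
    exact: (contract hFOb hDLb hmubar hLbar Ha ha4).
  have ef : 1 - 2 * alpha * mubar * Lbar / (mubar + Lbar) = 1 - alpha * c2 by rewrite /c2; field; lra.
  rewrite ef in hc.
  have he : dot (err k') (err k') <= (L * (beta ^ t * D)) * (L * (beta ^ t * D)).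
    rewrite -norm_sq.
    have h1 := herr k'; have h2 := hdevx k'.
    have h3 : norm (err k') <= L * (beta ^ t * D) by apply: (Rle_trans _ _ _ h1); apply Rmult_le_compat_l; lra.
    have := norm_ge0 (err k').
    move: h3; move: (norm (err k')) (L * (beta ^ t * D)) => a b; intros; nra.
  have hk1 : 0 <= 1 + alpha * delta by have := Rmult_lt_0_compat _ _ Ha hdelta; lra.
  have hk2 : 0 <= alpha * (alpha + / delta) by have hid := Rinv_0_lt_compat _ hdelta; apply Rmult_le_pos; lra.
  have h4 := Rmult_le_compat_l _ _ _ hk1 hc.
  have h5 := Rmult_le_compat_l _ _ _ hk2 he.
  have ec : (1 + alpha * delta) * (1 - alpha * c2) = c1 * c1.
    rewrite hc1sq /delta; field; lra.
  rewrite -ec; rewrite /C2.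
  move: h4 h5; move: (dot (vsub (T (zbar (x k'))) (T xstar)) (vsub (T (zbar (x k'))) (T xstar)))
    (dot (vsub (zbar (x k')) xstar) (vsub (zbar (x k')) xstar)) (dot (err k') (err k')) => a b c0; intros.
  have := Rmult_assoc (1 + alpha * delta) (1 - alpha * c2) b. lra.
have hq1 : 0 < 1 - c1 * c1 by rewrite hc1sq; have := Rmult_lt_0_compat _ _ Ha hc2; lra.
have hq0 : 0 <= c1 * c1 by exact: Rle_0_sqr.
have hEk : forall k, dot (Ev k) (Ev k) <= (c1 * c1) ^ k * dot (Ev 0%nat) (Ev 0%nat) + C2 / (1 - c1 * c1).
  elim => [|k' IH].
    have : 0 <= C2 / (1 - c1 * c1) by apply Rmult_le_pos; [lra| left; apply Rinv_0_lt_compat].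
    simpl; lra.
  apply: (Rle_trans _ _ _ (hEs k')).
  have h1 := Rmult_le_compat_l _ _ _ hq0 IH.
  have e1 : c1 * c1 * ((c1 * c1) ^ k' * dot (Ev 0%nat) (Ev 0%nat) + C2 / (1 - c1 * c1)) + C2
      = (c1 * c1) ^ k'.+1 * dot (Ev 0%nat) (Ev 0%nat) + C2 / (1 - c1 * c1).
    simpl; field; lra.
  lra.
have hE0 : Ev 0%nat = vsub s0 xstar.
  apply: functional_extensionality => l; rewrite /Ev /vsub /zbar /col.
  rewrite (gsum_ext (G := fun _ => s0 l)); last by move=> j; rewrite Hx0.
  rewrite gsum_const; field; lra.
have hEb : norm (Ev k) <= c1 ^ k * norm (vsub s0 xstar) + c3 / sqrt (1 - c1 ^ 2) * beta ^ t.
  have hc10 : 0 <= c1 by apply sqrt_pos.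
  have hsq : sqrt (1 - c1 ^ 2) * sqrt (1 - c1 ^ 2) = 1 - c1 * c1.
    rewrite sqrt_sqrt; simpl; lra.
  have hsqp : 0 < sqrt (1 - c1 ^ 2) by apply sqrt_lt_R0; simpl; lra.
  have hc3 : c3 * c3 = alpha * (alpha + / delta) * (D * L) * (D * L).
    rewrite /c3.
    have := sqrt_sqrt (alpha * (alpha + / delta)) ltac:(have hid := Rinv_0_lt_compat _ hdelta; apply Rmult_le_pos; lra).
    move: (sqrt (alpha * (alpha + / delta))) => sq h; rewrite -h; ring.
  have hc30 : 0 <= c3.
    rewrite /c3; apply Rmult_le_pos; [apply Rmult_le_pos; [apply sqrt_pos| lra]| lra].
  set A1 := c1 ^ k * norm (vsub s0 xstar).
  set B1 := c3 / sqrt (1 - c1 ^ 2) * beta ^ t.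
  have hA1 : 0 <= A1 by apply Rmult_le_pos; [apply pow_le| apply norm_ge0].
  have hB1 : 0 <= B1.
    apply Rmult_le_pos; [apply Rmult_le_pos; [lra| left; apply Rinv_0_lt_compat; lra]| lra].
  apply sq_le_aux; first lra.
  rewrite norm_sq.
  apply: (Rle_trans _ _ _ (hEk k)).
  rewrite hE0 -norm_sq.
  have eA : (c1 * c1) ^ k * (norm (vsub s0 xstar) * norm (vsub s0 xstar)) = A1 * A1.
    rewrite /A1 Rpow_mult_distr; ring.
  have eB : C2 / (1 - c1 * c1) = B1 * B1.
    rewrite /B1 /C2 -hsq.
    have : c3 / sqrt (1 - c1 ^ 2) * beta ^ t * (c3 / sqrt (1 - c1 ^ 2) * beta ^ t)
       = (c3 * c3) * (beta ^ t * beta ^ t) / (sqrt (1 - c1 ^ 2) * sqrt (1 - c1 ^ 2)) by field; lra.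
    move=> ->; rewrite hc3; field; split; lra.
  rewrite eA eB.
  have : 0 <= A1 * B1 by apply Rmult_le_pos.
  lra.
have hxb : norm (vsub (x k i) (zbar (x k))) <= beta ^ t * D.
  apply: (Rle_trans _ _ _ _ (hdevx k)); exact: (norm_le_snorm (dev (x k)) i).
have hyb : norm (vsub (y k i) (zbar (y k))) <= D.
  apply: (Rle_trans _ _ _ _ (hdevy k)); exact: (norm_le_snorm (dev (y k)) i).
split.
  have := norm_triangle_sub (x k i) (zbar (x k)) xstar.
  rewrite -/(Ev k); lra.
have := norm_triangle_sub (y k i) (zbar (y k)) xstar.
rewrite -hxy -/(Ev k); rewrite -hxy in hyb.
have : 0 <= beta ^ t * D by apply Rmult_le_pos.
lra.
Qed.
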